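(* Under size movement costs: for any $\epsilon>0$, there exists a fully-dynamic bin packing algorithm with asymptotic competitive ratio $(1+\epsilon)$, additive term $O(\epsilon^{-2})$ and amortized recourse $O(\epsilon^{-1})$. Conversely, for infinitely many $\epsilon>0$, any fully-dynamic bin packing algorithm with asymptotic competitive ratio $(1+\epsilon)$ and additive term $o(n)$ requires $\Omega(\epsilon^{-1})$ amortized recourse.
   Context: Fully-dynamic bin packing: items of size $s_i\in[0,1]$ are inserted and deleted; at each time $t$ the algorithm maintains a packing of the current items $\mathcal{I}_t$ into unit bins and pays movement cost $c_i$ each time it moves item $i$. Size movement costs means $c_i=s_i$ for every item. The algorithm has asymptotic competitive ratio $\alpha'$ with additive term $\beta$ if at all times it uses at most $\alpha'\cdot OPT(\mathcal{I}_t)+\beta$ bins ($OPT$ the optimal number of bins), and amortized recourse $\gamma$ if its total movement cost up to time $t$ is at most $\gamma\sum_{i=1}^t c_i$, $c_i$ being the cost of the item updated at time $i$. $n$ denotes the number of items. *)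

(* Defs.v *)
From Stdlib Require Import Reals Lra List Arith Bool ClassicalEpsilon.
Import ListNotations.
Open Scope R_scope.
Open Scope bool_scope.

(** A sequence of
    updates is a list, earliest update first; time t = prefix of length t. *)
Inductive update : Type :=
| Ins : nat -> R -> update
| Del : nat -> update.

Definition sumR (l : list R) : R := fold_right Rplus 0 l.

Definition drop_id (i : nat) (l : list (nat * R)) : list (nat * R) :=
  filter (fun p => negb (Nat.eqb (fst p) i)) l.

Definition step (l : list (nat * R)) (u : update) : list (nat * R) :=
  match u with
  | Ins i s => (i, s) :: drop_id i l
  | Del i => drop_id i l
  end.

Definition cur (sigma : list update) : list (nat * R) := fold_left step sigma nil.

Definition present (i : nat) (l : list (nat * R)) : Prop := In i (map fst l).

Definition wf (sigma : list update) : Prop :=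
  forall t, (t < length sigma)%nat ->
    match nth t sigma (Del 0) with
    | Ins i s => 0 <= s <= 1 /\ ~ present i (cur (firstn t sigma))
    | Del i => present i (cur (firstn t sigma))
    end.

(** A (deterministic, online) algorithm maps the update history so far to
    a packing: a bin label for each item id. *)
Definition algorithm := list update -> nat -> nat.

Definition load (A : algorithm) (sigma : list update) (b : nat) : R :=
  sumR (map snd (filter (fun p => Nat.eqb (A sigma (fst p)) b) (cur sigma))).

Definition valid_alg (A : algorithm) : Prop :=
  forall sigma, wf sigma -> forall b, load A sigma b <= 1.

Definition bins_used (A : algorithm) (sigma : list update) : nat :=
  length (nodup Nat.eq_dec (map (fun p => A sigma (fst p)) (cur sigma))).

Definition packable (l : list R) (k : nat) : Prop :=
  exists f : nat -> nat,
    (forall j, (j < length l)%nat -> (f j < k)%nat) /\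
    (forall b, (b < k)%nat ->
       sumR (map (fun j => nth j l 0) (filter (fun j => Nat.eqb (f j) b) (seq 0 (length l)))) <= 1).

Definition OPT (l : list R) : nat :=
  epsilon (inhabits 0%nat)
    (fun k => packable l k /\ forall k', packable l k' -> (k <= k')%nat).

Definition sizes (sigma : list update) : list R := map snd (cur sigma).

Definition competitive_fn (A : algorithm) (alpha : R) (f : nat -> R) : Prop :=
  forall sigma, wf sigma ->
    INR (bins_used A sigma) <= alpha * INR (OPT (sizes sigma)) + f (length (cur sigma)).

Definition competitive (A : algorithm) (alpha beta : R) : Prop :=
  competitive_fn A alpha (fun _ => beta).

Definition upd_cost (prev : list update) (u : update) : R :=
  match u with
  | Ins _ s => s
  | Del i => sumR (map snd (filter (fun p => Nat.eqb (fst p) i) (cur prev)))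
  end.

Definition move_cost (A : algorithm) (prev next : list update) : R :=
  sumR (map snd (filter (fun p =>
          existsb (fun q => Nat.eqb (fst q) (fst p)) (cur next)
          && negb (Nat.eqb (A prev (fst p)) (A next (fst p))))
        (cur prev))).

Definition total_move (A : algorithm) (sigma : list update) : R :=
  sumR (map (fun t => move_cost A (firstn t sigma) (firstn (S t) sigma)) (seq 0 (length sigma))).

Definition total_cost (sigma : list update) : R :=
  sumR (map (fun t => upd_cost (firstn t sigma) (nth t sigma (Del 0))) (seq 0 (length sigma))).

Definition recourse (A : algorithm) (gamma : R) : Prop :=
  forall sigma, wf sigma -> total_move A sigma <= gamma * total_cost sigma.

Definition little_o (f : nat -> R) : Prop :=
  forall eta, 0 < eta -> exists N, forall n, (N <= n)%nat -> f n <= eta * INR n.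

(* Main.v *)
Require Import Defs.
From Stdlib Require Import Reals Lra Lia List Arith Bool Permutation ClassicalEpsilon Classical Psatz.
Import ListNotations.
Open Scope R_scope.

Definition sm {X : Type} (h : X -> R) (l : list X) : R := sumR (map h l).
Definition indb (b : bool) : R := if b then 1 else 0.

Lemma sumR_app (l1 l2 : list R) : sumR (l1 ++ l2) = sumR l1 + sumR l2.
Proof. induction l1 as [|a l IH]; simpl; [lra| rewrite IH; lra]. Qed.

Lemma sumR_cons a l : sumR (a :: l) = a + sumR l.
Proof. reflexivity. Qed.

Lemma sm_nil {X} (h : X -> R) : sm h [] = 0.
Proof. reflexivity. Qed.
Lemma sm_cons {X} (h : X -> R) x l : sm h (x :: l) = h x + sm h l.
Proof. reflexivity. Qed.
Lemma sm_app {X} (h : X -> R) l1 l2 : sm h (l1 ++ l2) = sm h l1 + sm h l2.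
Proof. unfold sm; rewrite map_app, sumR_app; reflexivity. Qed.

Lemma sm_ext {X} (h g : X -> R) l : (forall x, In x l -> h x = g x) -> sm h l = sm g l.
Proof. induction l as [|a l IH]; intros H; simpl; auto.
  rewrite !sm_cons. rewrite H by (left; auto). rewrite IH by (intros; apply H; right; auto); auto. Qed.

Lemma sm_le {X} (h g : X -> R) l : (forall x, In x l -> h x <= g x) -> sm h l <= sm g l.
Proof. induction l as [|a l IH]; intros H. rewrite !sm_nil; lra.
  rewrite !sm_cons. assert (h a <= g a) by (apply H; left; auto).
  assert (sm h l <= sm g l) by (apply IH; intros; apply H; right; auto). lra. Qed.

Lemma sm_zero {X} (l : list X) : sm (fun _ => 0) l = 0.
Proof. induction l; simpl; auto. rewrite sm_cons, IHl; lra. Qed.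

Lemma sm_nonneg {X} (h : X -> R) l : (forall x, In x l -> 0 <= h x) -> 0 <= sm h l.
Proof. intros H. rewrite <- (sm_zero l). apply sm_le; auto. Qed.

Lemma sm_perm {X} (h : X -> R) l l' : Permutation l l' -> sm h l = sm h l'.
Proof. induction 1; simpl; rewrite ?sm_cons; try lra.
  all: try (rewrite IHPermutation; auto); try (rewrite IHPermutation1; auto). Qed.

Lemma sm_plus {X} (h g : X -> R) l : sm (fun x => h x + g x) l = sm h l + sm g l.
Proof. induction l; simpl. rewrite !sm_nil; lra. rewrite !sm_cons, IHl; lra. Qed.
Lemma sm_minus {X} (h g : X -> R) l : sm (fun x => h x - g x) l = sm h l - sm g l.
Proof. induction l; simpl. rewrite !sm_nil; lra. rewrite !sm_cons, IHl; lra. Qed.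
Lemma sm_scal {X} (a : R) (h : X -> R) l : sm (fun x => a * h x) l = a * sm h l.
Proof. induction l; simpl. rewrite !sm_nil; lra. rewrite !sm_cons, IHl; lra. Qed.
Lemma sm_const {X} (a : R) (l : list X) : sm (fun _ => a) l = a * INR (length l).
Proof. induction l. rewrite sm_nil; simpl length; rewrite INR_0; lra.
  rewrite sm_cons, IHl. simpl length. rewrite S_INR; lra. Qed.

Lemma sm_filter {X} (h : X -> R) (P : X -> bool) l :
  sm h (filter P l) = sm (fun x => if P x then h x else 0) l.
Proof. induction l; cbn [filter]; auto. rewrite sm_cons. destruct (P a); rewrite ?sm_cons, IHl; lra. Qed.

Lemma sm_map {X Y} (h : Y -> R) (f : X -> Y) l : sm h (map f l) = sm (fun x => h (f x)) l.
Proof. unfold sm; rewrite map_map; auto. Qed.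

Lemma sm_sub {X} (h : X -> R) (P L : list X) :
  NoDup P -> incl P L -> (forall x, In x L -> 0 <= h x) -> sm h P <= sm h L.
Proof.
  revert L; induction P as [|x P IH]; intros L ND Inc Hn.
  - rewrite sm_nil; apply sm_nonneg; auto.
  - inversion ND; subst.
    assert (Hx: In x L) by (apply Inc; left; auto).
    destruct (in_split _ _ Hx) as (L1 & L2 & ->).
    rewrite (sm_perm h (L1 ++ x :: L2) (x :: L1 ++ L2)) by (symmetry; apply Permutation_middle).
    rewrite !sm_cons.
    assert (sm h P <= sm h (L1 ++ L2)).
    { apply IH; auto.
      - intros y Hy. assert (Hy' := Inc y (or_intror Hy)).
        apply in_app_or in Hy'. apply in_or_app. destruct Hy' as [H|[H|H]]; auto.
        subst; contradiction.
      - intros y Hy; apply Hn. apply in_app_or in Hy; apply in_or_app; simpl; tauto. }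
    lra.
Qed.

Lemma sum_eqb_nodup (n : nat) (v : R) (B : list nat) :
  NoDup B -> sumR (map (fun b => if Nat.eqb n b then v else 0) B) = if in_dec Nat.eq_dec n B then v else 0.
Proof.
  induction B as [|b B IH]; intros ND; simpl; auto.
  inversion ND; subst. rewrite IH by auto.
  destruct (Nat.eqb_spec n b); subst.
  - destruct (in_dec Nat.eq_dec b B); [contradiction|].
    destruct (Nat.eq_dec b b); [lra|congruence].
  - destruct (in_dec Nat.eq_dec n B); destruct (Nat.eq_dec b n); try lra; congruence.
Qed.

Lemma sumR_map_plus {Y} (F G : Y -> R) (B : list Y) :
  sumR (map (fun b => F b + G b) B) = sumR (map F B) + sumR (map G B).
Proof. induction B; simpl; [lra|rewrite IHB; lra]. Qed.

Lemma sumR_map_zero {Y} (B : list Y) : sumR (map (fun _ => 0) B) = 0.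
Proof. induction B; simpl; [lra|rewrite IHB; lra]. Qed.

Lemma partition_sum_gen {X} (lab : X -> nat) (h : X -> R) (B : list nat) (l : list X) :
  NoDup B ->
  sumR (map (fun b => sm h (filter (fun x => Nat.eqb (lab x) b) l)) B)
  = sm (fun x => if in_dec Nat.eq_dec (lab x) B then h x else 0) l.
Proof.
  intros ND; induction l as [|x l IH].
  - simpl. apply sumR_map_zero.
  - rewrite sm_cons, <- IH, <- sum_eqb_nodup by auto.
    rewrite <- sumR_map_plus. f_equal. apply map_ext. intros b; simpl.
    destruct (Nat.eqb (lab x) b); rewrite ?sm_cons; lra.
Qed.

Definition labs {X} (lab : X -> nat) (l : list X) := nodup Nat.eq_dec (map lab l).

Lemma partition_sum {X} (lab : X -> nat) (h : X -> R) (l : list X) :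
  sumR (map (fun b => sm h (filter (fun x => Nat.eqb (lab x) b) l)) (labs lab l)) = sm h l.
Proof.
  rewrite partition_sum_gen by apply NoDup_nodup.
  apply sm_ext. intros x Hx. destruct in_dec as [|n]; auto.
  exfalso; apply n. apply nodup_In. apply in_map; auto.
Qed.

Lemma length_labs {X} (lab : X -> nat) (l : list X) :
  INR (length (labs lab l)) = sumR (map (fun _ => 1) (labs lab l)).
Proof. induction (labs lab l). simpl; lra. cbn [length map]. rewrite sumR_cons, S_INR, IHl0; lra. Qed.

Lemma sumR_map_le {Y} (F G : Y -> R) (B : list Y) :
  (forall b, In b B -> F b <= G b) -> sumR (map F B) <= sumR (map G B).
Proof. intros H. apply (sm_le F G B H). Qed.

Lemma cur_snoc h u : cur (h ++ [u]) = step (cur h) u.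
Proof. unfold cur. rewrite fold_left_app. reflexivity. Qed.

Lemma cur_app h s : cur (h ++ s) = fold_left step s (cur h).
Proof. unfold cur. rewrite fold_left_app. reflexivity. Qed.

Lemma firstn_S_snoc {A} (s : list A) t d : (t < length s)%nat ->
  firstn (S t) s = firstn t s ++ [nth t s d].
Proof.
  revert t; induction s as [|a s IH]; intros t Ht; simpl in Ht; [lia|].
  destruct t. reflexivity.
  change (a :: firstn (S t) s = a :: (firstn t s ++ [nth t s d])). rewrite IH by lia; reflexivity.
Qed.

Lemma drop_id_nodup i l : NoDup (map fst l) -> NoDup (map fst (drop_id i l)).
Proof.
  induction l as [|x l IH]; simpl; intros ND; auto.
  inversion ND; subst. destruct (negb (Nat.eqb (fst x) i)); simpl; auto.
  constructor; auto. intros Hin. apply H1.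
  apply in_map_iff in Hin as (y & Hy & Hy2). apply filter_In in Hy2 as [Hy2 _].
  rewrite <- Hy; apply in_map; auto.
Qed.

Lemma in_drop_id i l x : In x (drop_id i l) <-> In x l /\ fst x <> i.
Proof.
  unfold drop_id. rewrite filter_In. destruct (Nat.eqb_spec (fst x) i); simpl; intuition.
Qed.

Lemma step_nodup l u : NoDup (map fst l) -> NoDup (map fst (step l u)).
Proof.
  intros ND; destruct u as [i s|i]; simpl.
  - constructor. intros Hin. apply in_map_iff in Hin as (y & Hy & Hy2).
    apply in_drop_id in Hy2. simpl in Hy. tauto.
    apply drop_id_nodup; auto.
  - apply drop_id_nodup; auto.
Qed.

Lemma fold_step_nodup s l : NoDup (map fst l) -> NoDup (map fst (fold_left step s l)).
Proof. revert l; induction s; simpl; intros; auto. apply IHs, step_nodup; auto. Qed.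

Lemma cur_nodup h : NoDup (map fst (cur h)).
Proof. apply fold_step_nodup. constructor. Qed.

Lemma nodup_fst_nodup {A B} (l : list (A * B)) : NoDup (map fst l) -> NoDup l.
Proof.
  induction l as [|x l IH]; simpl; intros ND; constructor; inversion ND; subst; auto.
  intros Hin; apply H1; apply in_map; auto.
Qed.

Lemma nodup_fst_eq {A B} (l : list (A * B)) x y :
  NoDup (map fst l) -> In x l -> In y l -> fst x = fst y -> x = y.
Proof.
  induction l as [|z l IH]; simpl; intros ND Hx Hy E; [tauto|].
  inversion ND; subst. destruct Hx as [<-|Hx]; destruct Hy as [<-|Hy]; auto.
  - exfalso; apply H1; rewrite E; apply in_map; auto.
  - exfalso; apply H1; rewrite <- E; apply in_map; auto.
Qed.

Lemma present_iff i l : present i l <-> exists s, In (i, s) l.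
Proof.
  unfold present; rewrite in_map_iff; split.
  - intros ((j,s) & E & H); simpl in E; subst; eauto.
  - intros (s & H); exists (i,s); auto.
Qed.

Lemma In_step x l u : In x (step l u) <->
  match u with Ins i s => x = (i,s) \/ (In x l /\ fst x <> i) | Del i => In x l /\ fst x <> i end.
Proof. destruct u; simpl; rewrite ?in_drop_id; intuition. Qed.

Lemma map_nth_filter_seq {X Y} (F : X -> Y) (P : X -> bool) (l : list X) (d : X) :
  map (fun j => F (nth j l d)) (filter (fun j => P (nth j l d)) (seq 0 (length l)))
  = map F (filter P l).
Proof.
  induction l as [|x l IH]; auto.
  cbn [length seq]. rewrite <- seq_shift. cbn [filter nth].
  rewrite filter_map_swap. cbn [nth].
  destruct (P x); cbn [map]; rewrite map_map; cbn [nth]; rewrite IH; auto.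
Qed.

Lemma map_nth_seq {X Y} (F : X -> Y) (l : list X) (d : X) :
  map (fun j => F (nth j l d)) (seq 0 (length l)) = map F l.
Proof.
  induction l as [|x l IH]; auto.
  cbn [length seq]. rewrite <- seq_shift. cbn [map nth]. rewrite map_map. cbn [nth]. rewrite IH; auto.
Qed.

Lemma packable_of_lab (l : list (nat * R)) (k : nat) (g : nat -> nat) :
  (forall x, In x l -> (g (fst x) < k)%nat) ->
  (forall b, (b < k)%nat -> sm snd (filter (fun x => Nat.eqb (g (fst x)) b) l) <= 1) ->
  packable (map snd l) k.
Proof.
  intros H1 H2. exists (fun j => g (fst (nth j l (0%nat, 0)))). split.
  - intros j Hj. rewrite length_map in Hj. apply H1. apply nth_In; auto.
  - intros b Hb. rewrite length_map.
    rewrite (map_ext_in (fun j => nth j (map snd l) 0) (fun j => snd (nth j l (0%nat,0)))).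
    2: { intros j _. apply (map_nth snd l (0%nat, 0) j). }
    rewrite (map_nth_filter_seq snd (fun x => Nat.eqb (g (fst x)) b) l (0%nat,0)).
    apply H2; auto.
Qed.

Definition optP (l : list R) (k : nat) := packable l k /\ forall k', packable l k' -> (k <= k')%nat.

Lemma min_exists (P : nat -> Prop) n : P n -> exists m, P m /\ forall k, P k -> (m <= k)%nat.
Proof.
  revert P. induction n as [n IH] using (well_founded_induction lt_wf). intros P Hn.
  destruct (classic (exists k, (k < n)%nat /\ P k)) as [(k & Hk & Pk)|Hno].
  - apply (IH k Hk P Pk).
  - exists n; split; auto. intros k Pk. destruct (Nat.lt_ge_cases k n); auto.
    exfalso; apply Hno; eauto.
Qed.

Lemma OPT_spec l k : packable l k -> optP l (OPT l).
Proof.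
  intros Hp. unfold OPT.
  apply epsilon_spec. destruct (min_exists (packable l) k Hp) as (m & H1 & H2).
  exists m; split; auto.
Qed.

Lemma OPT_le l k : packable l k -> (OPT l <= k)%nat.
Proof. intros Hp. destruct (OPT_spec l k Hp) as [_ H]. apply H; auto. Qed.

Definition szk (c : R) (k : nat) : R :=
  match k with
  | 0 => 1/2 + c
  | 1 => 1/2 + c + 3*c/5
  | 2 => 1/2 - 2*c
  | 3 => 1/2 - 2*c - 3*c/5
  | 4 => c
  | 5 => 2*c/5
  | 6 => 8*c/5
  | _ => 0
  end.

Definition loadn c n0 n1 n2 n3 n4 n5 n6 :=
  szk c 0 * INR n0 + szk c 1 * INR n1 + szk c 2 * INR n2 + szk c 3 * INR n3
  + szk c 4 * INR n4 + szk c 5 * INR n5 + szk c 6 * INR n6.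

Definition gdb (n0 n1 n2 n3 : nat) : bool :=
  ((1 <=? n0) && (1 <=? n2)) || ((1 <=? n1) && (1 <=? n3)).

Lemma nat_cases3 n : n = 0%nat \/ n = 1%nat \/ 2 <= INR n.
Proof. destruct n as [|[|n]]; auto. right; right. rewrite !S_INR. pose proof (pos_INR n); lra. Qed.

Lemma loadn_lb c n0 n1 n2 n3 n4 n5 n6 : 0 < c <= 1/40 ->
  loadn c n0 n1 n2 n3 n4 n5 n6 >= (1/2 + c) * INR (n0 + n1) + (2/5) * INR (n2 + n3).
Proof.
  intros Hc. unfold loadn, szk. rewrite !plus_INR.
  pose proof (pos_INR n0); pose proof (pos_INR n1); pose proof (pos_INR n2);
  pose proof (pos_INR n3); pose proof (pos_INR n4); pose proof (pos_INR n5); pose proof (pos_INR n6).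
  nra.
Qed.

Lemma na_le1 c n0 n1 n2 n3 n4 n5 n6 : 0 < c <= 1/40 ->
  loadn c n0 n1 n2 n3 n4 n5 n6 <= 1 -> (n0 + n1 <= 1)%nat.
Proof.
  intros Hc Hl. pose proof (loadn_lb c n0 n1 n2 n3 n4 n5 n6 Hc).
  destruct (nat_cases3 (n0 + n1)) as [E|[E|E]]; try lia.
  pose proof (pos_INR (n2 + n3)). nra.
Qed.

Lemma nb_le1 c n0 n1 n2 n3 n4 n5 n6 : 0 < c <= 1/40 ->
  loadn c n0 n1 n2 n3 n4 n5 n6 <= 1 -> (n0 + n1 = 1)%nat -> (n2 + n3 <= 1)%nat.
Proof.
  intros Hc Hl E. pose proof (loadn_lb c n0 n1 n2 n3 n4 n5 n6 Hc).
  rewrite E in H. simpl INR in H.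
  destruct (nat_cases3 (n2 + n3)) as [E2|[E2|E2]]; try lia. nra.
Qed.

Lemma nat_le1_cases n m : (n + m <= 1)%nat -> (n = 0 /\ m = 0 \/ n = 1 /\ m = 0 \/ n = 0 /\ m = 1)%nat.
Proof. lia. Qed.

Lemma alpha_label c n0 n1 n2 n3 n4 n5 n6 : 0 < c <= 1/40 -> n5 = 0%nat -> n6 = 0%nat ->
  loadn c n0 n1 n2 n3 n4 n5 n6 <= 1 ->
  INR (n0 + n1) * indb (gdb n0 n1 n2 n3) >=
  INR (n0 + n1) - (5 / (2 * c)) * (1 - loadn c n0 n1 n2 n3 n4 n5 n6) - 3 * (c * INR n4).
Proof.
  intros Hc E5 E6 Hl. subst n5 n6.
  set (L := 5 / (2 * c)).
  assert (HL : L * c = 5/2) by (unfold L; field; lra).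
  assert (HL0 : 0 < L) by (unfold L; apply Rdiv_lt_0_compat; lra).
  pose proof (pos_INR n4) as P4.
  assert (Hg : 0 <= c * INR n4) by nra.
  assert (HLw : 0 <= L * (1 - loadn c n0 n1 n2 n3 n4 0 0)) by nra.
  pose proof (na_le1 _ _ _ _ _ _ _ _ Hc Hl) as Ha.
  destruct (Nat.eq_dec (n0 + n1) 0) as [Z|NZ].
  { rewrite Z. simpl INR. lra. }
  assert (Ha1 : (n0 + n1 = 1)%nat) by lia.
  pose proof (nb_le1 _ _ _ _ _ _ _ _ Hc Hl Ha1) as Hb.
  rewrite Ha1. simpl INR.
  destruct (gdb n0 n1 n2 n3) eqn:G; simpl indb.
  { lra. }
  assert (Goal: 1 <= L * (1 - loadn c n0 n1 n2 n3 n4 0 0) + 3 * (c * INR n4)).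
  2: lra.
  apply nat_le1_cases in Ha. apply nat_le1_cases in Hb.
  destruct Ha as [[-> ->]|[[-> ->]|[-> ->]]]; try lia;
  destruct Hb as [[-> ->]|[[-> ->]|[-> ->]]]; simpl in G; try discriminate;
  unfold loadn, szk in *; simpl INR in *.
  -
    destruct (Rle_dec 1 (3 * (c * INR n4))). lra.
    assert (0.12 <= 1 - ((1 / 2 + c) * 1 + (1 / 2 + c + 3 * c / 5) * 0 + (1 / 2 - 2 * c) * 0 +
       (1 / 2 - 2 * c - 3 * c / 5) * 0 + c * INR n4 + 2 * c / 5 * 0 + 8 * c / 5 * 0)) by lra.
    nra.
  -
    assert (INR n4 <= 8/5) by nra.
    assert (n4 <= 1)%nat.
    { destruct (nat_cases3 n4) as [->|[->|E]]; [lia|lia|lra]. }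
    assert (INR n4 <= 1) by (replace 1 with (INR 1) by reflexivity; apply le_INR; auto).
    nra.
  -
    destruct (Rle_dec 1 (3 * (c * INR n4))). lra.
    assert (0.12 <= 1 - ((1 / 2 + c) * 0 + (1 / 2 + c + 3 * c / 5) * 1 + (1 / 2 - 2 * c) * 0 +
       (1 / 2 - 2 * c - 3 * c / 5) * 0 + c * INR n4 + 2 * c / 5 * 0 + 8 * c / 5 * 0)) by lra.
    nra.
  -
    assert (INR n4 <= 2/5) by nra.
    assert (n4 = 0)%nat.
    { destruct (nat_cases3 n4) as [->|[->|E]]; [lia| simpl INR in *; lra|lra]. }
    subst n4. simpl INR in *. nra.
Qed.

Lemma beta_label c n0 n1 n2 n3 n4 n5 n6 : 0 < c <= 1/40 -> n4 = 0%nat ->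
  loadn c n0 n1 n2 n3 n4 n5 n6 <= 1 ->
  INR (n0 + n1) * indb (gdb n0 n1 n2 n3) <= (5 / c) * (1 - loadn c n0 n1 n2 n3 n4 n5 n6).
Proof.
  intros Hc E4 Hl. subst n4.
  set (L := 5 / c).
  assert (HL : L * c = 5) by (unfold L; field; lra).
  assert (HL0 : 0 < L) by (unfold L; apply Rdiv_lt_0_compat; lra).
  pose proof (pos_INR n5); pose proof (pos_INR n6).
  assert (HLw : 0 <= L * (1 - loadn c n0 n1 n2 n3 0 n5 n6)) by nra.
  destruct (gdb n0 n1 n2 n3) eqn:G; simpl indb; [|lra].
  pose proof (na_le1 _ _ _ _ _ _ _ _ Hc Hl) as Ha.
  destruct (Nat.eq_dec (n0 + n1) 0) as [Z|NZ].
  { unfold gdb in G. apply orb_true_iff in G. rewrite !andb_true_iff, !Nat.leb_le in G. lia. }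
  assert (Ha1 : (n0 + n1 = 1)%nat) by lia.
  pose proof (nb_le1 _ _ _ _ _ _ _ _ Hc Hl Ha1) as Hb.
  rewrite Ha1. simpl INR.
  apply nat_le1_cases in Ha. apply nat_le1_cases in Hb.
  assert (Hk : 1 - loadn c n0 n1 n2 n3 0 n5 n6 >= c / 5).
  2: { assert (L * (c/5) = 1) by (unfold L; field; lra). nra. }
  destruct Ha as [[-> ->]|[[-> ->]|[-> ->]]]; try lia;
  destruct Hb as [[-> ->]|[[-> ->]|[-> ->]]]; simpl in G; try discriminate;
  unfold loadn, szk in *; simpl INR in *.
  - assert (INR n5 + 4 * INR n6 <= 5/2) by nra.
    assert (INR n5 + 4 * INR n6 <= 2).
    { pose proof (pos_INR n5).
      destruct (nat_cases3 n6) as [E6|[E6|E]]; try (rewrite E6 in *; simpl INR in *); try lra.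
      assert (INR n5 <= 5/2) by lra.
      destruct n5 as [|[|[|n5]]]; try (simpl INR in *; lra).
      rewrite !S_INR in *. pose proof (pos_INR n5). lra. }
    nra.
  - assert (INR n5 + 4 * INR n6 <= 5/2) by nra.
    assert (INR n5 + 4 * INR n6 <= 2).
    { pose proof (pos_INR n5).
      destruct (nat_cases3 n6) as [E6|[E6|E]]; try (rewrite E6 in *; simpl INR in *); try lra.
      assert (INR n5 <= 5/2) by lra.
      destruct n5 as [|[|[|n5]]]; try (simpl INR in *; lra).
      rewrite !S_INR in *. pose proof (pos_INR n5). lra. }
    nra.
Qed.

Definition kind (M i : nat) : nat :=
  if (i <? M)%nat then 0 else if (i <? 2*M)%nat then 1 else if (i <? 3*M)%nat then 2
  else if (i <? 4*M)%nat then 3 else if (i <? 6*M)%nat then 4 else if (i <? 7*M)%nat then 5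
  else if (i <? 8*M)%nat then 6 else 7.
Definition sz M c i := szk c (kind M i).
Definition mk M c i : nat * R := (i, sz M c i).
Definition insL M c (ids : list nat) := map (fun i => Ins i (sz M c i)) ids.
Definition delL (ids : list nat) := map Del ids.
Definition canon M c (l : list (nat * R)) := forall x, In x l -> snd x = sz M c (fst x).
Definition canu M c (u : update) := match u with Ins i s => s = sz M c i | Del _ => True end.

Ltac kindtacH H := unfold kind in H; repeat match type of H with context [Nat.ltb ?a ?b] => destruct (Nat.ltb_spec a b) end; try lia.
Ltac kindtac := unfold kind; repeat match goal with |- context [Nat.ltb ?a ?b] => destruct (Nat.ltb_spec a b) end; try lia.

Lemma szk_bounds c k : 0 < c <= 1/40 -> 0 <= szk c k <= 1.
Proof. intros. destruct k as [|[|[|[|[|[|[|k]]]]]]]; simpl; lra. Qed.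

Lemma szk_big c k : 0 < c <= 1/40 -> (k < 4)%nat -> 2/5 <= szk c k.
Proof. intros. destruct k as [|[|[|[|k]]]]; simpl; try lra; lia. Qed.

Lemma present_ins i j s l : present i (step l (Ins j s)) <-> i = j \/ present i l.
Proof.
  unfold present; simpl. rewrite in_map_iff. split.
  - intros [E|(x & Hx & Hin)]; auto. apply in_drop_id in Hin as [Hin _]. right; subst; apply in_map; auto.
  - intros [E|Hp]; auto. destruct (Nat.eq_dec j i); auto. right.
    apply in_map_iff in Hp as (x & Hx & Hin). exists x; split; auto. apply in_drop_id; split; auto; lia.
Qed.

Lemma present_del i j l : present i (step l (Del j)) <-> present i l /\ i <> j.
Proof.
  unfold present; simpl. rewrite !in_map_iff. split.
  - intros (x & Hx & Hin). apply in_drop_id in Hin as [Hin Hne]. subst; split; eauto.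
  - intros [(x & Hx & Hin) Hne]. exists x; split; auto. apply in_drop_id; split; auto; subst; auto.
Qed.

Lemma presI M c ids l i : present i (fold_left step (insL M c ids) l) <-> present i l \/ In i ids.
Proof.
  unfold insL; revert l; induction ids as [|j ids IH]; intros l; cbn [map fold_left]. simpl; tauto.
  rewrite IH, present_ins. simpl. intuition.
Qed.

Lemma presD ids l i : present i (fold_left step (delL ids) l) <-> present i l /\ ~ In i ids.
Proof.
  unfold delL; revert l; induction ids as [|j ids IH]; intros l; cbn [map fold_left]. simpl; tauto.
  rewrite IH, present_del. simpl. intuition.
Qed.

Lemma canon_fold M c s l : canon M c l -> Forall (canu M c) s -> canon M c (fold_left step s l).
Proof.
  revert l; induction s as [|u s IH]; intros l Hl Hs; simpl; auto.
  inversion Hs; subst. apply IH; auto.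
  intros x Hx. apply In_step in Hx. destruct u as [i s0|i]; simpl in *.
  - destruct Hx as [->|[Hx _]]; simpl; auto.
  - destruct Hx as [Hx _]; auto.
Qed.

Lemma canu_insL M c ids : Forall (canu M c) (insL M c ids).
Proof. apply Forall_forall. intros u Hu. apply in_map_iff in Hu as (i & <- & _). simpl; auto. Qed.
Lemma canu_delL M c ids : Forall (canu M c) (delL ids).
Proof. apply Forall_forall. intros u Hu. apply in_map_iff in Hu as (i & <- & _). simpl; auto. Qed.

Definition wf_from (l : list (nat * R)) (s : list update) : Prop :=
  forall t, (t < length s)%nat ->
    match nth t s (Del 0) with
    | Ins i x => 0 <= x <= 1 /\ ~ present i (fold_left step (firstn t s) l)
    | Del i => present i (fold_left step (firstn t s) l)
    end.

Lemma wf_iff s : wf s <-> wf_from [] s.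
Proof. reflexivity. Qed.

Lemma wf_from_app l s1 s2 : wf_from l s1 -> wf_from (fold_left step s1 l) s2 -> wf_from l (s1 ++ s2).
Proof.
  intros H1 H2 t Ht. rewrite length_app in Ht.
  destruct (Nat.lt_ge_cases t (length s1)) as [Hlt|Hge].
  - rewrite app_nth1 by auto. rewrite firstn_app.
    replace (t - length s1)%nat with 0%nat by lia. rewrite firstn_O, app_nil_r. apply H1; auto.
  - replace t with (length s1 + (t - length s1))%nat by lia.
    rewrite app_nth2_plus, firstn_app_2, fold_left_app. apply H2; lia.
Qed.

Lemma wf_prefix s1 s2 : wf (s1 ++ s2) -> wf s1.
Proof.
  intros H t Ht. specialize (H t). rewrite length_app in H.
  rewrite app_nth1 in H by auto. rewrite firstn_app in H.
  replace (t - length s1)%nat with 0%nat in H by lia. rewrite firstn_O, app_nil_r in H. apply H; lia.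
Qed.

Lemma skipn_nth {X} (l : list X) t d : (t < length l)%nat -> skipn t l = nth t l d :: skipn (S t) l.
Proof.
  revert t; induction l as [|x l IH]; intros t Ht; simpl in Ht; [lia|].
  destruct t; simpl; auto. apply IH; lia.
Qed.

Lemma NoDup_nth_firstn {X} (l : list X) t d : NoDup l -> (t < length l)%nat -> ~ In (nth t l d) (firstn t l).
Proof.
  intros ND Ht Hin. rewrite <- (firstn_skipn t l) in ND. rewrite (skipn_nth l t d Ht) in ND.
  apply NoDup_remove_2 in ND. apply ND. apply in_or_app; auto.
Qed.

Lemma In_firstn {X} (l : list X) t x : In x (firstn t l) -> In x l.
Proof. intros H. rewrite <- (firstn_skipn t l). apply in_or_app; auto. Qed.

Lemma wf_insL M c ids l : NoDup ids -> (forall i, In i ids -> ~ present i l) ->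
  (forall i, In i ids -> 0 <= sz M c i <= 1) -> wf_from l (insL M c ids).
Proof.
  intros ND Hnp Hsz t Ht. unfold insL in *. rewrite length_map in Ht.
  rewrite (nth_indep _ _ (Ins 0%nat (sz M c 0%nat))) by (rewrite length_map; auto).
  rewrite (map_nth (fun i => Ins i (sz M c i)) ids 0%nat t).
  split. apply Hsz, nth_In; auto.
  rewrite firstn_map. fold (insL M c (firstn t ids)). rewrite presI.
  intros [H|H]. apply (Hnp (nth t ids 0%nat)); auto. apply nth_In; auto.
  apply (NoDup_nth_firstn ids t 0%nat ND Ht H).
Qed.

Lemma wf_delL ids l : NoDup ids -> (forall i, In i ids -> present i l) -> wf_from l (delL ids).
Proof.
  intros ND Hp t Ht. unfold delL in *. rewrite length_map in Ht.
  rewrite (map_nth Del ids 0%nat t).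
  rewrite firstn_map. fold (delL (firstn t ids)). rewrite presD. split.
  apply Hp, nth_In; auto. apply (NoDup_nth_firstn ids t 0%nat ND Ht).
Qed.

Definition sig0 M c := insL M c (seq 0 (4*M)) ++ insL M c (seq (4*M) (2*M)).
Definition half1 M c := delL (seq (4*M) (2*M)) ++ insL M c (seq (6*M) (2*M)).
Definition half2 M c := delL (seq (6*M) (2*M)) ++ insL M c (seq (4*M) (2*M)).
Fixpoint rounds M c r := match r with 0%nat => [] | S r => rounds M c r ++ (half1 M c ++ half2 M c) end.
Definition adv M c R := sig0 M c ++ rounds M c R.

Definition stA M (l : list (nat * R)) := forall i, present i l <-> (i < 6*M)%nat.
Definition stB M (l : list (nat * R)) := forall i, present i l <-> ((i < 4*M) \/ (6*M <= i < 8*M))%nat.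

Lemma stA_sig0 M c : stA M (cur (sig0 M c)).
Proof.
  intros i. unfold cur, sig0. rewrite fold_left_app, presI, presI, !in_seq.
  unfold present; simpl. lia.
Qed.

Lemma stB_half1 M c l : stA M l -> stB M (fold_left step (half1 M c) l).
Proof. unfold stA, stB. intros H i. unfold half1. rewrite fold_left_app, presI, presD, H, !in_seq. lia. Qed.

Lemma stA_half2 M c l : stB M l -> stA M (fold_left step (half2 M c) l).
Proof. unfold stA, stB. intros H i. unfold half2. rewrite fold_left_app, presI, presD, H, !in_seq. lia. Qed.

Lemma stA_rounds M c r l : stA M l -> stA M (fold_left step (rounds M c r) l).
Proof.
  induction r; simpl; intros H; auto.
  rewrite !fold_left_app. apply stA_half2, stB_half1, IHr; auto.
Qed.

Lemma sz_01 M c i : 0 < c <= 1/40 -> 0 <= sz M c i <= 1.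
Proof. intros; apply szk_bounds; auto. Qed.

Lemma wf_sig0 M c : 0 < c <= 1/40 -> wf_from [] (sig0 M c).
Proof.
  intros Hc. unfold sig0. apply wf_from_app.
  - apply wf_insL. apply seq_NoDup. intros i _ H; inversion H. intros; apply sz_01; auto.
  - apply wf_insL. apply seq_NoDup. intros i Hi. rewrite in_seq in Hi. rewrite presI, in_seq.
    unfold present; simpl; lia. intros; apply sz_01; auto.
Qed.

Lemma wf_half1 M c l : 0 < c <= 1/40 -> stA M l -> wf_from l (half1 M c).
Proof.
  intros Hc H. unfold half1. apply wf_from_app.
  - apply wf_delL. apply seq_NoDup. intros i Hi. rewrite in_seq in Hi. apply (proj2 (H i)); lia.
  - apply wf_insL. apply seq_NoDup. intros i Hi. rewrite in_seq in Hi. rewrite presD, (H i), in_seq. lia.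
    intros; apply sz_01; auto.
Qed.

Lemma wf_half2 M c l : 0 < c <= 1/40 -> stB M l -> wf_from l (half2 M c).
Proof.
  intros Hc H. unfold half2. apply wf_from_app.
  - apply wf_delL. apply seq_NoDup. intros i Hi. rewrite in_seq in Hi. apply (proj2 (H i)); lia.
  - apply wf_insL. apply seq_NoDup. intros i Hi. rewrite in_seq in Hi. rewrite presD, (H i), in_seq. lia.
    intros; apply sz_01; auto.
Qed.

Lemma wf_rounds M c r l : 0 < c <= 1/40 -> stA M l -> wf_from l (rounds M c r).
Proof.
  intros Hc. revert l. induction r; simpl; intros l H.
  - intros t Ht; simpl in Ht; lia.
  - apply wf_from_app. apply IHr; auto.
    apply wf_from_app. apply wf_half1; auto. apply stA_rounds; auto.
    rewrite <- fold_left_app. apply wf_half2; auto. rewrite fold_left_app.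
    apply stB_half1, stA_rounds; auto.
Qed.

Lemma wf_adv M c R : 0 < c <= 1/40 -> wf (adv M c R).
Proof.
  intros Hc. apply wf_iff. unfold adv. apply wf_from_app. apply wf_sig0; auto.
  apply wf_rounds; auto. apply stA_sig0.
Qed.

Lemma canu_sig0 M c : Forall (canu M c) (sig0 M c).
Proof. unfold sig0; apply Forall_app; split; apply canu_insL. Qed.
Lemma canu_rounds M c r : Forall (canu M c) (rounds M c r).
Proof.
  induction r; simpl; auto. apply Forall_app; split; auto.
  unfold half1, half2. apply Forall_app; split; apply Forall_app; split; auto using canu_insL, canu_delL.
Qed.
Lemma canu_adv M c R : Forall (canu M c) (adv M c R).
Proof. unfold adv; apply Forall_app; split; auto using canu_sig0, canu_rounds. Qed.

Lemma canon_cur M c h : Forall (canu M c) h -> canon M c (cur h).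
Proof. intros H. apply canon_fold; auto. intros x []. Qed.

Lemma keep_fold s l i : (forall j, In (Del j) s -> j <> i) -> present i l -> present i (fold_left step s l).
Proof.
  revert l; induction s as [|u s IH]; intros l H Hp; simpl; auto.
  apply IH. intros j Hj; apply H; right; auto.
  destruct u as [j x|j]. apply present_ins; auto. apply present_del; split; auto.
  intros ->. apply (H j); auto. left; auto.
Qed.

Lemma keep_half1 M c l t i : stA M l -> (i < 4*M)%nat -> present i (fold_left step (firstn t (half1 M c)) l).
Proof.
  intros H Hi. apply keep_fold. 2: apply (proj2 (H i)); lia.
  intros j Hj. apply In_firstn in Hj. unfold half1, delL, insL in Hj.
  apply in_app_or in Hj as [Hj|Hj]; apply in_map_iff in Hj as (k & E & Hk); try discriminate.
  inversion E; subst. apply in_seq in Hk. lia.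
Qed.

Lemma keep_half2 M c l t i : stB M l -> (i < 4*M)%nat -> present i (fold_left step (firstn t (half2 M c)) l).
Proof.
  intros H Hi. apply keep_fold. 2: apply (proj2 (H i)); lia.
  intros j Hj. apply In_firstn in Hj. unfold half2, delL, insL in Hj.
  apply in_app_or in Hj as [Hj|Hj]; apply in_map_iff in Hj as (k & E & Hk); try discriminate.
  inversion E; subst. apply in_seq in Hk. lia.
Qed.

Lemma perm_state M c l ids : NoDup (map fst l) -> canon M c l -> NoDup ids ->
  (forall i, present i l <-> In i ids) -> Permutation l (map (mk M c) ids).
Proof.
  intros ND Hc NDi Hp. apply NoDup_Permutation.
  - apply nodup_fst_nodup; auto.
  - apply nodup_fst_nodup. rewrite map_map. simpl. rewrite map_id; auto.
  - intros [i s]. split.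
    + intros Hin. assert (s = sz M c i) by (apply (Hc (i,s) Hin)). subst.
      change (i, sz M c i) with (mk M c i). apply in_map. apply Hp. apply present_iff; eauto.
    + intros Hin. apply in_map_iff in Hin as (j & E & Hj). unfold mk in E. inversion E; subst.
      apply Hp in Hj. apply present_iff in Hj as (s & Hs). pose proof (Hc _ Hs) as E2. simpl in E2. subst s. auto.
Qed.

Definition Ea M := seq 0 (6*M).
Definition Eb M := seq 0 (4*M) ++ seq (6*M) (2*M).

Lemma perm_A M c l : NoDup (map fst l) -> canon M c l -> stA M l -> Permutation l (map (mk M c) (Ea M)).
Proof.
  intros. apply perm_state; auto. apply seq_NoDup. intros i. rewrite (H1 i). unfold Ea. rewrite in_seq. lia.
Qed.

Lemma perm_B M c l : NoDup (map fst l) -> canon M c l -> stB M l -> Permutation l (map (mk M c) (Eb M)).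
Proof.
  intros. apply perm_state; auto.
  - unfold Eb. apply NoDup_app; try apply seq_NoDup. intros a Ha Hb. rewrite in_seq in *. lia.
  - intros i. rewrite (H1 i). unfold Eb. rewrite in_app_iff, !in_seq. lia.
Qed.

Lemma sm_seq_const (g : nat -> R) v a n : (forall i, (a <= i < a + n)%nat -> g i = v) -> sm g (seq a n) = v * INR n.
Proof.
  revert a; induction n; intros a H; cbn [seq]. rewrite sm_nil; simpl; lra.
  rewrite sm_cons, IHn. rewrite H by lia. rewrite S_INR; lra. intros; apply H; lia.
Qed.

Lemma sm_mk_block M c (F : nat -> R -> R) a n k :
  (forall i, (a <= i < a + n)%nat -> kind M i = k) ->
  sm (fun x => F (kind M (fst x)) (snd x)) (map (mk M c) (seq a n)) = F k (szk c k) * INR n.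
Proof.
  intros H. rewrite sm_map. apply sm_seq_const. intros i Hi. unfold mk, sz; simpl. rewrite H; auto.
Qed.

Lemma seq_Ea M : seq 0 (6*M) = seq 0 M ++ seq M M ++ seq (2*M) M ++ seq (3*M) M ++ seq (4*M) (2*M).
Proof.
  replace (6*M)%nat with (M + (M + (M + (M + 2*M))))%nat by lia. rewrite !seq_app.
  replace (0 + M)%nat with M by lia. replace (M + M)%nat with (2*M)%nat by lia.
  replace (2 * M + M)%nat with (3*M)%nat by lia. replace (3 * M + M)%nat with (4*M)%nat by lia. reflexivity.
Qed.

Lemma seq_B M : seq 0 (4*M) = seq 0 M ++ seq M M ++ seq (2*M) M ++ seq (3*M) M.
Proof.
  replace (4*M)%nat with (M + (M + (M + M)))%nat by lia. rewrite !seq_app.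
  replace (0 + M)%nat with M by lia. replace (M + M)%nat with (2*M)%nat by lia.
  replace (2 * M + M)%nat with (3*M)%nat by lia. reflexivity.
Qed.

Lemma seq_G M : seq (6*M) (2*M) = seq (6*M) M ++ seq (7*M) M.
Proof.
  replace (2*M)%nat with (M + M)%nat by lia. rewrite !seq_app.
  replace (6 * M + M)%nat with (7*M)%nat by lia. reflexivity.
Qed.

Definition BL M c := map (mk M c) (seq 0 (4*M)).

Lemma sm_kind_BL M c (F : nat -> R -> R) :
  sm (fun x => F (kind M (fst x)) (snd x)) (BL M c) =
  (F 0%nat (szk c 0) + F 1%nat (szk c 1) + F 2%nat (szk c 2) + F 3%nat (szk c 3)) * INR M.
Proof.
  unfold BL. rewrite seq_B, !map_app, !sm_app.
  rewrite (sm_mk_block M c F 0 M 0), (sm_mk_block M c F M M 1), (sm_mk_block M c F (2*M) M 2),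
    (sm_mk_block M c F (3*M) M 3); try (intros; kindtac). lra.
Qed.

Lemma sm_kind_Ea M c (F : nat -> R -> R) :
  sm (fun x => F (kind M (fst x)) (snd x)) (map (mk M c) (Ea M)) =
  sm (fun x => F (kind M (fst x)) (snd x)) (BL M c) + F 4%nat (szk c 4) * INR (2*M).
Proof.
  unfold Ea, BL. rewrite seq_Ea, seq_B, !map_app, !sm_app.
  rewrite (sm_mk_block M c F (4*M) (2*M) 4); try (intros; kindtac). lra.
Qed.

Lemma sm_kind_Eb M c (F : nat -> R -> R) :
  sm (fun x => F (kind M (fst x)) (snd x)) (map (mk M c) (Eb M)) =
  sm (fun x => F (kind M (fst x)) (snd x)) (BL M c) + F 5%nat (szk c 5) * INR M + F 6%nat (szk c 6) * INR M.
Proof.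
  unfold Eb, BL. rewrite seq_G, !map_app, !sm_app.
  rewrite (sm_mk_block M c F (6*M) M 5), (sm_mk_block M c F (7*M) M 6); try (intros; kindtac). lra.
Qed.

Definition cntn M k (L : list (nat * R)) : nat := length (filter (fun x => Nat.eqb (kind M (fst x)) k) L).

Lemma INR_cntn M k L : INR (cntn M k L) = sm (fun x => indb (Nat.eqb (kind M (fst x)) k)) L.
Proof.
  unfold cntn. induction L as [|x L IH]. simpl; rewrite sm_nil; auto.
  rewrite sm_cons. cbn [filter]. destruct (Nat.eqb (kind M (fst x)) k); simpl indb.
  cbn [length]. rewrite S_INR, IH; lra. rewrite IH; lra.
Qed.

Lemma szk_decomp c k : szk c k = szk c 0 * indb (Nat.eqb k 0) + szk c 1 * indb (Nat.eqb k 1)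
  + szk c 2 * indb (Nat.eqb k 2) + szk c 3 * indb (Nat.eqb k 3) + szk c 4 * indb (Nat.eqb k 4)
  + szk c 5 * indb (Nat.eqb k 5) + szk c 6 * indb (Nat.eqb k 6).
Proof. destruct k as [|[|[|[|[|[|[|k]]]]]]]; simpl; lra. Qed.

Lemma load_decomp M c L : canon M c L ->
  sm snd L = loadn c (cntn M 0 L) (cntn M 1 L) (cntn M 2 L) (cntn M 3 L) (cntn M 4 L) (cntn M 5 L) (cntn M 6 L).
Proof.
  intros Hc. rewrite (sm_ext snd (fun x => szk c (kind M (fst x)))) by (intros; apply Hc; auto).
  unfold loadn. rewrite !INR_cntn.
  rewrite (sm_ext _ (fun x => szk c 0 * indb (Nat.eqb (kind M (fst x)) 0) + szk c 1 * indb (Nat.eqb (kind M (fst x)) 1)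
  + szk c 2 * indb (Nat.eqb (kind M (fst x)) 2) + szk c 3 * indb (Nat.eqb (kind M (fst x)) 3) + szk c 4 * indb (Nat.eqb (kind M (fst x)) 4)
  + szk c 5 * indb (Nat.eqb (kind M (fst x)) 5) + szk c 6 * indb (Nat.eqb (kind M (fst x)) 6))) by (intros; apply szk_decomp).
  rewrite !sm_plus, !sm_scal. reflexivity.
Qed.

Definition isA M (x : nat * R) := Nat.ltb (kind M (fst x)) 2.
Definition isB M (x : nat * R) := Nat.leb 2 (kind M (fst x)) && Nat.ltb (kind M (fst x)) 4.

Lemma na_sum M L : INR (cntn M 0 L + cntn M 1 L) = sm (fun x => indb (isA M x)) L.
Proof.
  rewrite plus_INR, !INR_cntn, <- sm_plus. apply sm_ext. intros x _. unfold isA.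
  destruct (kind M (fst x)) as [|[|k]]; simpl; lra.
Qed.

Definition gdL M L := gdb (cntn M 0 L) (cntn M 1 L) (cntn M 2 L) (cntn M 3 L).
Definition lab (A : algorithm) h (x : nat * R) := A h (fst x).
Definition Lb (A : algorithm) h b := filter (fun x => Nat.eqb (lab A h x) b) (cur h).
Definition ga M A h (x : nat * R) := indb (isA M x) * indb (gdL M (Lb A h (lab A h x))).
Definition GG M A h := sm (ga M A h) (cur h).
Definition bins A h := labs (lab A h) (cur h).

Lemma bins_INR A h : INR (bins_used A h) = sm (fun _ => 1) (bins A h).
Proof. unfold bins_used, bins. apply length_labs. Qed.

Lemma load_Lb A h b : load A h b = sm snd (Lb A h b).
Proof. reflexivity. Qed.

Lemma partition_cur A h (g : nat * R -> R) : sm (fun b => sm g (Lb A h b)) (bins A h) = sm g (cur h).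
Proof. apply partition_sum. Qed.

Lemma in_Lb A h b x : In x (Lb A h b) <-> In x (cur h) /\ lab A h x = b.
Proof. unfold Lb. rewrite filter_In, Nat.eqb_eq. tauto. Qed.

Lemma ga_Lb M A h b : sm (ga M A h) (Lb A h b) = INR (cntn M 0 (Lb A h b) + cntn M 1 (Lb A h b)) * indb (gdL M (Lb A h b)).
Proof.
  rewrite na_sum, <- (Rmult_comm (indb _)), <- sm_scal. apply sm_ext. intros x Hx.
  apply in_Lb in Hx as [_ E]. unfold ga. rewrite E. lra.
Qed.

Lemma canon_Lb M c A h b : canon M c (cur h) -> canon M c (Lb A h b).
Proof. intros H x Hx. apply in_Lb in Hx as [Hx _]. apply H; auto. Qed.

Lemma cntn_zero M k L : (forall x, In x L -> kind M (fst x) <> k) -> cntn M k L = 0%nat.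
Proof.
  intros H. unfold cntn. induction L as [|x L IH]; simpl; auto.
  destruct (Nat.eqb_spec (kind M (fst x)) k). exfalso; apply (H x); auto; left; auto.
  apply IH; intros; apply H; right; auto.
Qed.

Lemma stA_kind M c L x : canon M c L -> stA M L -> In x L -> (kind M (fst x) <= 4)%nat.
Proof.
  intros Hc Hs Hx. assert (present (fst x) L) by (apply in_map; auto).
  apply Hs in H. kindtac.
Qed.

Lemma stB_kind M c L x : canon M c L -> stB M L -> In x L -> kind M (fst x) <> 4%nat.
Proof.
  intros Hc Hs Hx. assert (present (fst x) L) by (apply in_map; auto).
  apply Hs in H. kindtac.
Qed.

Lemma sm_cur_A M c h (g : nat * R -> R) (F : nat -> R -> R) :
  canon M c (cur h) -> stA M (cur h) -> (forall x, g x = F (kind M (fst x)) (snd x)) ->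
  sm g (cur h) = (F 0%nat (szk c 0) + F 1%nat (szk c 1) + F 2%nat (szk c 2) + F 3%nat (szk c 3)) * INR M
     + F 4%nat (szk c 4) * INR (2*M).
Proof.
  intros Hc Hs Hg. rewrite (sm_ext g (fun x => F (kind M (fst x)) (snd x))) by auto.
  rewrite (sm_perm _ _ _ (perm_A M c (cur h) (cur_nodup h) Hc Hs)).
  rewrite sm_kind_Ea, sm_kind_BL. reflexivity.
Qed.

Lemma sm_cur_B M c h (g : nat * R -> R) (F : nat -> R -> R) :
  canon M c (cur h) -> stB M (cur h) -> (forall x, g x = F (kind M (fst x)) (snd x)) ->
  sm g (cur h) = (F 0%nat (szk c 0) + F 1%nat (szk c 1) + F 2%nat (szk c 2) + F 3%nat (szk c 3)) * INR M
     + F 5%nat (szk c 5) * INR M + F 6%nat (szk c 6) * INR M.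
Proof.
  intros Hc Hs Hg. rewrite (sm_ext g (fun x => F (kind M (fst x)) (snd x))) by auto.
  rewrite (sm_perm _ _ _ (perm_B M c (cur h) (cur_nodup h) Hc Hs)).
  rewrite sm_kind_Eb, sm_kind_BL. reflexivity.
Qed.

Lemma sm_comb {Y} (X Yf Z : Y -> R) l c B : sm (fun b => X b - l * (1 - Yf b) - 3 * (c * Z b)) B =
  sm X B - l * (sm (fun _ => 1) B - sm Yf B) - 3 * (c * sm Z B).
Proof. induction B; rewrite ?sm_nil, ?sm_cons; [lra|]. rewrite IHB. lra. Qed.

Lemma G_alpha M c A h : 0 < c <= 1/40 -> (forall b, load A h b <= 1) ->
  canon M c (cur h) -> stA M (cur h) ->
  GG M A h >= 2 * INR M - (5 / (2 * c)) * (INR (bins_used A h) - 2 * INR M) - 3 * c * (2 * INR M).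
Proof.
  intros Hc Hv Hcan Hs.
  unfold GG. rewrite <- (partition_cur A h).
  set (lam := 5 / (2 * c)).
  assert (Hle : sm (fun b => sm (ga M A h) (Lb A h b)) (bins A h) >=
     sm (fun b => sm (fun x => indb (isA M x)) (Lb A h b) - lam * (1 - sm snd (Lb A h b))
         - 3 * (c * sm (fun x => indb (Nat.eqb (kind M (fst x)) 4)) (Lb A h b))) (bins A h)).
  { apply Rle_ge, sm_le. intros b _. rewrite ga_Lb, <- na_sum, <- INR_cntn.
    rewrite (load_decomp M c) by (apply canon_Lb; auto).
    apply Rge_le, alpha_label; auto.
    - apply cntn_zero. intros x Hx. apply in_Lb in Hx as [Hx _]. pose proof (stA_kind M c _ x Hcan Hs Hx). lia.
    - apply cntn_zero. intros x Hx. apply in_Lb in Hx as [Hx _]. pose proof (stA_kind M c _ x Hcan Hs Hx). lia.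
    - rewrite <- (load_decomp M c) by (apply canon_Lb; auto). apply Hv. }
  rewrite sm_comb in Hle.
  assert (E1 : sm (fun b => sm (fun x => indb (isA M x)) (Lb A h b)) (bins A h) = 2 * INR M).
  { rewrite partition_cur. rewrite (sm_cur_A M c h (fun x => indb (isA M x)) (fun k _ => indb (Nat.ltb k 2))); auto.
    simpl indb. lra. }
  assert (E2 : sm (fun b => sm snd (Lb A h b)) (bins A h) = 2 * INR M).
  { rewrite partition_cur. rewrite (sm_cur_A M c h snd (fun _ s => s)); auto.
    unfold szk. rewrite mult_INR. simpl INR. field. }
  assert (E3 : sm (fun b => sm (fun x => indb (Nat.eqb (kind M (fst x)) 4)) (Lb A h b)) (bins A h) = 2 * INR M).
  { rewrite partition_cur. rewrite (sm_cur_A M c h _ (fun k _ => indb (Nat.eqb k 4))); auto.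
    simpl indb. rewrite mult_INR. simpl INR. lra. }
  rewrite E1, E2, E3, <- bins_INR in Hle. lra.
Qed.

Lemma sm_comb2 {Y} (Yf : Y -> R) l B : sm (fun b => l * (1 - Yf b)) B = l * (sm (fun _ => 1) B - sm Yf B).
Proof. induction B; rewrite ?sm_nil, ?sm_cons; [lra|]. rewrite IHB. lra. Qed.

Lemma G_beta M c A h : 0 < c <= 1/40 -> (forall b, load A h b <= 1) ->
  canon M c (cur h) -> stB M (cur h) ->
  GG M A h <= (5 / c) * (INR (bins_used A h) - 2 * INR M).
Proof.
  intros Hc Hv Hcan Hs.
  unfold GG. rewrite <- (partition_cur A h).
  assert (Hle : sm (fun b => sm (ga M A h) (Lb A h b)) (bins A h) <=
     sm (fun b => (5 / c) * (1 - sm snd (Lb A h b))) (bins A h)).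
  { apply sm_le. intros b _. rewrite ga_Lb.
    rewrite (load_decomp M c) by (apply canon_Lb; auto).
    apply beta_label; auto.
    - apply cntn_zero. intros x Hx. apply in_Lb in Hx as [Hx _]. apply (stB_kind M c _ x Hcan Hs Hx).
    - rewrite <- (load_decomp M c) by (apply canon_Lb; auto). apply Hv. }
  rewrite sm_comb2 in Hle.
  assert (E2 : sm (fun b => sm snd (Lb A h b)) (bins A h) = 2 * INR M).
  { rewrite partition_cur. rewrite (sm_cur_B M c h snd (fun _ s => s)); auto.
    unfold szk. field. }
  rewrite E2, <- bins_INR in Hle. lra.
Qed.

Lemma na_le1_Lb M c A h b : 0 < c <= 1/40 -> canon M c (cur h) -> load A h b <= 1 ->
  (cntn M 0 (Lb A h b) + cntn M 1 (Lb A h b) <= 1)%nat.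
Proof.
  intros Hc Hcan Hl. rewrite load_Lb, (load_decomp M c) in Hl by (apply canon_Lb; auto).
  eapply na_le1; eauto.
Qed.

Lemma cntn_pos M k L y : In y L -> kind M (fst y) = k -> (1 <= cntn M k L)%nat.
Proof.
  intros Hy Hk. unfold cntn. destruct (filter (fun x => Nat.eqb (kind M (fst x)) k) L) eqn:E.
  - assert (In y (filter (fun x => Nat.eqb (kind M (fst x)) k) L)) by (apply filter_In; split; auto; apply Nat.eqb_eq; auto).
    rewrite E in H; destruct H.
  - simpl; lia.
Qed.

Lemma cntn_ex M k L : (1 <= cntn M k L)%nat -> exists y, In y L /\ kind M (fst y) = k.
Proof.
  unfold cntn. destruct (filter (fun x => Nat.eqb (kind M (fst x)) k) L) eqn:E; simpl; [lia|].
  intros _. assert (In p (filter (fun x => Nat.eqb (kind M (fst x)) k) L)) by (rewrite E; left; auto).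
  apply filter_In in H as [H1 H2]. apply Nat.eqb_eq in H2. eauto.
Qed.

Lemma big_in_B M c h1 h2 y : canon M c (cur h1) -> canon M c (cur h2) -> stA M (cur h1) -> stB M (cur h2) ->
  In y (cur h1) -> (kind M (fst y) < 4)%nat -> In y (cur h2).
Proof.
  intros C1 C2 S1 S2 Hy Hk. destruct y as [i s].
  assert (Hp : present i (cur h1)) by (apply present_iff; eauto).
  apply S1 in Hp. assert (Hp2 : present i (cur h2)) by (apply S2; simpl in Hk; kindtacH Hk).
  apply present_iff in Hp2 as (s2 & Hs2).
  pose proof (C1 _ Hy) as E1; pose proof (C2 _ Hs2) as E2; simpl in E1, E2; subst; auto.
Qed.

Definition mvd (A : algorithm) h1 h2 (x : nat * R) := indb (negb (Nat.eqb (A h1 (fst x)) (A h2 (fst x)))).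

Lemma indb_01 b : 0 <= indb b <= 1.
Proof. destruct b; simpl; lra. Qed.

Lemma ga_01 M A h x : 0 <= ga M A h x <= 1.
Proof. unfold ga. pose proof (indb_01 (isA M x)); pose proof (indb_01 (gdL M (Lb A h (lab A h x)))). nra. Qed.

Lemma sm_ge1 {X} (g : X -> R) L y : (forall x, In x L -> 0 <= g x) -> In y L -> 1 <= g y -> 1 <= sm g L.
Proof.
  intros Hn Hy Hg. destruct (in_split _ _ Hy) as (L1 & L2 & ->).
  rewrite sm_app, sm_cons.
  assert (0 <= sm g L1) by (apply sm_nonneg; intros; apply Hn; apply in_or_app; auto).
  assert (0 <= sm g L2) by (apply sm_nonneg; intros; apply Hn; apply in_or_app; right; right; auto).
  lra.
Qed.

Lemma per_item M c A h1 h2 x : 0 < c <= 1/40 -> (forall b, load A h1 b <= 1) ->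
  canon M c (cur h1) -> canon M c (cur h2) -> stA M (cur h1) -> stB M (cur h2) -> In x (cur h1) ->
  ga M A h1 x <= ga M A h2 x + indb (isA M x) * mvd A h1 h2 x
     + indb (isA M x) * sm (fun y => indb (isB M y) * mvd A h1 h2 y) (Lb A h1 (lab A h1 x)).
Proof.
  intros Hc Hv C1 C2 S1 S2 Hx.
  set (Sm := sm (fun y => indb (isB M y) * mvd A h1 h2 y) (Lb A h1 (lab A h1 x))).
  assert (HS : 0 <= Sm).
  { apply sm_nonneg. intros y _. unfold mvd. pose proof (indb_01 (isB M y)); pose proof (indb_01 (negb (Nat.eqb (A h1 (fst y)) (A h2 (fst y))))). nra. }
  pose proof (ga_01 M A h1 x); pose proof (ga_01 M A h2 x).
  destruct H as [Hg1 Hg1']; destruct H0 as [Hg2 Hg2'].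
  assert (Hm : 0 <= mvd A h1 h2 x <= 1) by apply indb_01.
  unfold ga at 1. destruct (isA M x) eqn:IA; simpl indb. 2: { rewrite !Rmult_0_l, !Rplus_0_r. exact Hg2. }
  destruct (gdL M (Lb A h1 (lab A h1 x))) eqn:GD; simpl indb; [|lra].
  unfold mvd at 1. destruct (Nat.eqb_spec (A h1 (fst x)) (A h2 (fst x))) as [E|NE]; simpl indb; [|lra].
  destruct (Rle_dec 1 Sm) as [S1'|S1']; [lra|].
  assert (Hb : forall y, In y (Lb A h1 (lab A h1 x)) -> isB M y = true -> A h2 (fst y) = lab A h1 x).
  { intros y Hy HB. destruct (Nat.eqb_spec (A h1 (fst y)) (A h2 (fst y))) as [E2|NE2].
    - apply in_Lb in Hy as [_ Hy]. unfold lab in *. congruence.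
    - exfalso. apply S1'. unfold Sm. apply (sm_ge1 _ _ y); auto.
      intros z _. unfold mvd. pose proof (indb_01 (isB M z)); pose proof (indb_01 (negb (Nat.eqb (A h1 (fst z)) (A h2 (fst z))))). nra.
      unfold mvd. rewrite HB. destruct (Nat.eqb_spec (A h1 (fst y)) (A h2 (fst y))); [contradiction|]. simpl; lra. }
  set (l1 := lab A h1 x) in *.
  assert (Hna := na_le1_Lb M c A h1 l1 Hc C1 (Hv l1)).
  assert (Hx1 : In x (Lb A h1 l1)) by (apply in_Lb; split; auto).
  assert (Hxk : (kind M (fst x) < 2)%nat) by (unfold isA in IA; apply Nat.ltb_lt; auto).
  assert (Hx2 : In x (cur h2)) by (apply (big_in_B M c h1 h2); auto; lia).
  assert (Hl2 : lab A h2 x = l1) by (unfold l1, lab; congruence).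
  unfold ga. rewrite IA, Hl2. simpl indb.
  assert (Hx2' : In x (Lb A h2 l1)) by (apply in_Lb; split; auto).
  enough (HG2 : gdL M (Lb A h2 l1) = true) by (rewrite HG2; simpl; lra).
  unfold gdL, gdb in GD |- *. apply orb_true_iff in GD. rewrite !andb_true_iff, !Nat.leb_le in GD.
  apply orb_true_iff. rewrite !andb_true_iff, !Nat.leb_le.
  assert (Hkx : kind M (fst x) = 0%nat \/ kind M (fst x) = 1%nat) by lia.
  destruct Hkx as [K|K].
  - pose proof (cntn_pos M 0 _ x Hx1 K).
    assert (HC : (1 <= cntn M 2 (Lb A h1 l1))%nat) by lia.
    destruct (cntn_ex M 2 _ HC) as (y & Hy & Ky).
    assert (HBy : isB M y = true) by (unfold isB; rewrite Ky; auto).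
    assert (Hy1 : In y (cur h1)) by (apply in_Lb in Hy; tauto).
    assert (Hy2 : In y (cur h2)) by (apply (big_in_B M c h1 h2); auto; lia).
    assert (In y (Lb A h2 l1)) by (apply in_Lb; split; auto; apply Hb; auto).
    left; split. apply (cntn_pos M 0 _ x); auto. apply (cntn_pos M 2 _ y); auto.
  - pose proof (cntn_pos M 1 _ x Hx1 K).
    assert (HC : (1 <= cntn M 3 (Lb A h1 l1))%nat) by lia.
    destruct (cntn_ex M 3 _ HC) as (y & Hy & Ky).
    assert (HBy : isB M y = true) by (unfold isB; rewrite Ky; auto).
    assert (Hy1 : In y (cur h1)) by (apply in_Lb in Hy; tauto).
    assert (Hy2 : In y (cur h2)) by (apply (big_in_B M c h1 h2); auto; lia).
    assert (In y (Lb A h2 l1)) by (apply in_Lb; split; auto; apply Hb; auto).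
    right; split. apply (cntn_pos M 1 _ x); auto. apply (cntn_pos M 3 _ y); auto.
Qed.

Lemma sm_rest_zero M c (g : nat * R -> R) a n : (4*M <= a)%nat ->
  (forall x, (4 <= kind M (fst x))%nat -> g x = 0) -> sm g (map (mk M c) (seq a n)) = 0.
Proof.
  intros Ha Hg. rewrite <- (sm_zero (map (mk M c) (seq a n))). apply sm_ext.
  intros x Hx. apply in_map_iff in Hx as (i & <- & Hi). apply in_seq in Hi. apply Hg. simpl. kindtac.
Qed.

Lemma sm_cur_BL_A M c h g : canon M c (cur h) -> stA M (cur h) ->
  (forall x, (4 <= kind M (fst x))%nat -> g x = 0) -> sm g (cur h) = sm g (BL M c).
Proof.
  intros Hc Hs Hg. rewrite (sm_perm _ _ _ (perm_A M c (cur h) (cur_nodup h) Hc Hs)).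
  unfold Ea, BL. replace (6*M)%nat with (4*M + 2*M)%nat by lia. rewrite seq_app, map_app, sm_app.
  rewrite (sm_rest_zero M c g (0 + 4*M) (2*M)); [lra|lia|auto].
Qed.

Lemma sm_cur_BL_B M c h g : canon M c (cur h) -> stB M (cur h) ->
  (forall x, (4 <= kind M (fst x))%nat -> g x = 0) -> sm g (cur h) = sm g (BL M c).
Proof.
  intros Hc Hs Hg. rewrite (sm_perm _ _ _ (perm_B M c (cur h) (cur_nodup h) Hc Hs)).
  unfold Eb, BL. rewrite map_app, sm_app.
  rewrite (sm_rest_zero M c g (6*M) (2*M)); [lra|lia|auto].
Qed.

Lemma isA_false M x : (4 <= kind M (fst x))%nat -> isA M x = false.
Proof. intros. unfold isA. apply Nat.ltb_ge. lia. Qed.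
Lemma isB_false M x : (4 <= kind M (fst x))%nat -> isB M x = false.
Proof. intros. unfold isB. apply andb_false_iff. right. apply Nat.ltb_ge. lia. Qed.

Lemma GG_move M c A h1 h2 : 0 < c <= 1/40 -> (forall b, load A h1 b <= 1) ->
  canon M c (cur h1) -> canon M c (cur h2) -> stA M (cur h1) -> stB M (cur h2) ->
  GG M A h1 <= GG M A h2 + sm (mvd A h1 h2) (BL M c).
Proof.
  intros Hc Hv C1 C2 S1 S2.
  set (mb := fun x => sm (fun y => indb (isB M y) * mvd A h1 h2 y) (Lb A h1 (lab A h1 x))).
  assert (St1 : GG M A h1 <= sm (ga M A h2) (cur h1) + sm (fun x => indb (isA M x) * mvd A h1 h2 x) (cur h1)
     + sm (fun x => indb (isA M x) * mb x) (cur h1)).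
  { unfold GG. rewrite <- !sm_plus. apply sm_le. intros x Hx. apply per_item with (c := c); auto. }
  assert (St2 : sm (fun x => indb (isA M x) * mb x) (cur h1) <= sm (fun y => indb (isB M y) * mvd A h1 h2 y) (cur h1)).
  { rewrite <- (partition_cur A h1). rewrite <- (partition_cur A h1 (fun y => indb (isB M y) * mvd A h1 h2 y)).
    apply sm_le. intros b Hb.
    rewrite (sm_ext _ (fun x => indb (isA M x) * sm (fun y => indb (isB M y) * mvd A h1 h2 y) (Lb A h1 b))).
    2: { intros x Hx. apply in_Lb in Hx as [_ E]. unfold mb. rewrite E. auto. }
    rewrite (sm_ext _ (fun x => sm (fun y => indb (isB M y) * mvd A h1 h2 y) (Lb A h1 b) * indb (isA M x))) by (intros; lra).
    rewrite sm_scal, <- na_sum.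
    pose proof (na_le1_Lb M c A h1 b Hc C1 (Hv b)).
    assert (INR (cntn M 0 (Lb A h1 b) + cntn M 1 (Lb A h1 b)) <= 1) by (replace 1 with (INR 1) by reflexivity; apply le_INR; auto).
    assert (0 <= sm (fun y => indb (isB M y) * mvd A h1 h2 y) (Lb A h1 b)).
    { apply sm_nonneg. intros y _. unfold mvd. pose proof (indb_01 (isB M y)); pose proof (indb_01 (negb (Nat.eqb (A h1 (fst y)) (A h2 (fst y))))). nra. }
    pose proof (pos_INR (cntn M 0 (Lb A h1 b) + cntn M 1 (Lb A h1 b))). nra. }
  assert (E1 : sm (ga M A h2) (cur h1) = GG M A h2).
  { unfold GG. rewrite (sm_cur_BL_A M c h1), (sm_cur_BL_B M c h2); auto;
    intros x Hx; unfold ga; rewrite isA_false; auto; simpl; lra. }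
  rewrite (sm_cur_BL_A M c h1 (fun x => indb (isA M x) * mvd A h1 h2 x)) in St1; auto.
  2: { intros x Hx. rewrite isA_false; auto; simpl; lra. }
  rewrite (sm_cur_BL_A M c h1 (fun x => indb (isB M x) * mvd A h1 h2 x)) in St2; auto.
  2: { intros x Hx. rewrite isB_false; auto; simpl; lra. }
  assert (E3 : sm (fun x => indb (isA M x) * mvd A h1 h2 x) (BL M c) + sm (fun x => indb (isB M x) * mvd A h1 h2 x) (BL M c)
     = sm (mvd A h1 h2) (BL M c)).
  { rewrite <- sm_plus. apply sm_ext. intros x Hx. unfold BL in Hx. apply in_map_iff in Hx as (i & <- & Hi).
    apply in_seq in Hi. unfold isA, isB, mk; simpl fst.
    assert (kind M i < 4)%nat by kindtac.
    destruct (kind M i) as [|[|[|[|k]]]]; simpl; try lra; lia. }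
  lra.
Qed.

Definition mvI (A : algorithm) h s :=
  sm (fun t => move_cost A (h ++ firstn t s) (h ++ firstn (S t) s)) (seq 0 (length s)).

Lemma total_move_mvI A s : total_move A s = mvI A [] s.
Proof. reflexivity. Qed.

Lemma sm_seq_shift (F : nat -> R) a n : sm F (seq a n) = sm (fun t => F (a + t)%nat) (seq 0 n).
Proof.
  revert a F; induction n; intros a F; auto.
  cbn [seq]. rewrite !sm_cons. rewrite IHn, (IHn 1%nat).
  replace (a + 0)%nat with a by lia. f_equal. apply sm_ext. intros t _. f_equal. lia.
Qed.

Lemma mvI_app A h s1 s2 : mvI A h (s1 ++ s2) = mvI A h s1 + mvI A (h ++ s1) s2.
Proof.
  unfold mvI. rewrite length_app, seq_app, sm_app. f_equal.
  - apply sm_ext. intros t Ht. apply in_seq in Ht. rewrite !firstn_app.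
    replace (t - length s1)%nat with 0%nat by lia. replace (S t - length s1)%nat with 0%nat by lia.
    rewrite !firstn_O, !app_nil_r. reflexivity.
  - rewrite sm_seq_shift. apply sm_ext. intros t _. simpl plus.
    replace (S (length s1 + t)) with (length s1 + S t)%nat by lia.
    rewrite !firstn_app_2, !app_assoc. reflexivity.
Qed.

Lemma mvI_single A h u : mvI A h [u] = move_cost A h (h ++ [u]).
Proof. unfold mvI. cbn [length seq firstn]. rewrite sm_cons, sm_nil, app_nil_r. simpl firstn. lra. Qed.

Lemma move_cost_lower A prev next P : NoDup P -> incl P (cur prev) -> incl P (cur next) ->
  (forall x, In x (cur prev) -> 0 <= snd x) ->
  sm (fun x => snd x * indb (negb (Nat.eqb (A prev (fst x)) (A next (fst x))))) P <= move_cost A prev next.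
Proof.
  intros ND H1 H2 Hn. unfold move_cost. fold (sm snd (filter (fun p =>
          existsb (fun q => Nat.eqb (fst q) (fst p)) (cur next)
          && negb (Nat.eqb (A prev (fst p)) (A next (fst p)))) (cur prev))).
  rewrite sm_filter.
  eapply Rle_trans. 2: apply sm_sub; eauto.
  2: { intros x Hx. destruct (_ && _); auto; lra. }
  apply Req_le, sm_ext. intros x Hx.
  assert (existsb (fun q => Nat.eqb (fst q) (fst x)) (cur next) = true).
  { apply existsb_exists. exists x; split; auto. apply Nat.eqb_refl. }
  rewrite H. simpl. destruct (negb _); simpl; lra.
Qed.

Lemma indb_tri a b c : indb (negb (Nat.eqb a c)) <= indb (negb (Nat.eqb a b)) + indb (negb (Nat.eqb b c)).
Proof.
  destruct (Nat.eqb_spec a c), (Nat.eqb_spec a b), (Nat.eqb_spec b c); simpl; try lra. congruence.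
Qed.

Lemma mv_lower A h s P : NoDup P ->
  (forall t, (t <= length s)%nat -> incl P (cur (h ++ firstn t s))) ->
  (forall t x, (t <= length s)%nat -> In x (cur (h ++ firstn t s)) -> 0 <= snd x) ->
  sm (fun x => snd x * indb (negb (Nat.eqb (A h (fst x)) (A (h ++ s) (fst x))))) P <= mvI A h s.
Proof.
  intros ND. induction s as [|u s IH] using rev_ind; intros Hin Hn.
  - rewrite app_nil_r. unfold mvI; simpl. rewrite sm_nil.
    rewrite <- (sm_zero P). apply Req_le, sm_ext. intros x _. rewrite Nat.eqb_refl. simpl; lra.
  - rewrite mvI_app, mvI_single.
    assert (IH' := IH).
    assert (Hs : forall t, (t <= length s)%nat -> firstn t (s ++ [u]) = firstn t s).
    { intros t Ht. rewrite firstn_app. replace (t - length s)%nat with 0%nat by lia. rewrite firstn_O, app_nil_r; auto. }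
    assert (Hfull : firstn (length (s ++ [u])) (s ++ [u]) = s ++ [u]) by apply firstn_all.
    assert (Hl : length (s ++ [u]) = S (length s)) by (rewrite length_app; simpl; lia).
    specialize (IH' (fun t Ht => eq_ind _ (fun l => incl P (cur (h ++ l))) (Hin t ltac:(lia)) _ (Hs t Ht))).
    specialize (IH' (fun t x Ht Hx => Hn t x ltac:(lia) (eq_ind _ (fun l => In x (cur (h ++ l))) Hx _ (eq_sym (Hs t Ht))))).
    assert (Hprev : incl P (cur (h ++ s))).
    { assert (E : firstn (length s) (s ++ [u]) = s) by (rewrite Hs by lia; apply firstn_all).
      pose proof (Hin (length s) ltac:(lia)) as HH. rewrite E in HH. exact HH. }
    assert (Hnext : incl P (cur ((h ++ s) ++ [u]))).
    { pose proof (Hin (length (s ++ [u])) ltac:(lia)) as HH. rewrite Hfull, app_assoc in HH. exact HH. }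
    assert (Hnn : forall x, In x (cur (h ++ s)) -> 0 <= snd x).
    { intros x Hx. apply (Hn (length s)). lia. rewrite Hs by lia. rewrite firstn_all; auto. }
    pose proof (move_cost_lower A (h ++ s) ((h ++ s) ++ [u]) P ND Hprev Hnext Hnn).
    rewrite <- app_assoc in H |- *.
    eapply Rle_trans. 2: apply Rplus_le_compat; [exact IH'|exact H].
    rewrite <- sm_plus. apply sm_le. intros x Hx.
    assert (0 <= snd x) by (apply Hnn, Hprev; auto).
    pose proof (indb_tri (A h (fst x)) (A (h ++ s) (fst x)) (A (h ++ s ++ [u]) (fst x))). nra.
Qed.

Definition ucost M c (u : update) := match u with Ins _ s => s | Del i => sz M c i end.

Lemma NoDup_filter' {X} (P : X -> bool) l : NoDup l -> NoDup (filter P l).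
Proof. apply NoDup_filter. Qed.

Lemma canon_in M c l x : canon M c l -> In x l -> x = mk M c (fst x).
Proof. intros H Hx. pose proof (H _ Hx) as E. destruct x as [i s]. unfold mk. simpl in *. subst. auto. Qed.

Lemma upd_cost_le M c prev u : 0 < c <= 1/40 -> canon M c (cur prev) -> upd_cost prev u <= ucost M c u.
Proof.
  intros Hc Hcan. destruct u as [i s|i]; simpl; [lra|].
  fold (sm snd (filter (fun p => Nat.eqb (fst p) i) (cur prev))).
  replace (sz M c i) with (sm snd [mk M c i]) by (unfold mk; rewrite sm_cons, sm_nil; simpl; lra).
  apply sm_sub.
  - apply NoDup_filter, nodup_fst_nodup, cur_nodup.
  - intros x Hx. apply filter_In in Hx as [Hx E]. apply Nat.eqb_eq in E.
    left. rewrite (canon_in M c _ x Hcan Hx). rewrite E. reflexivity.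
  - intros x [<-|[]]. apply szk_bounds; auto.
Qed.

Lemma total_cost_le M c s : 0 < c <= 1/40 -> Forall (canu M c) s -> total_cost s <= sm (ucost M c) s.
Proof.
  intros Hc Hf. unfold total_cost. fold (sm (fun t => upd_cost (firstn t s) (nth t s (Del 0))) (seq 0 (length s))).
  eapply Rle_trans.
  - apply (sm_le _ (fun t => ucost M c (nth t s (Del 0)))). intros t Ht. apply upd_cost_le; auto.
    apply canon_cur. apply Forall_forall. intros u Hu. apply In_firstn in Hu. rewrite Forall_forall in Hf. auto.
  - unfold sm. rewrite (map_nth_seq (ucost M c) s (Del 0)). lra.
Qed.

Lemma sm_ucost_ins M c ids : sm (ucost M c) (insL M c ids) = sm (sz M c) ids.
Proof. unfold insL. rewrite sm_map. reflexivity. Qed.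
Lemma sm_ucost_del M c ids : sm (ucost M c) (delL ids) = sm (sz M c) ids.
Proof. unfold delL. rewrite sm_map. reflexivity. Qed.

Lemma sm_sz_mk M c ids : sm (sz M c) ids = sm snd (map (mk M c) ids).
Proof. rewrite sm_map. reflexivity. Qed.

Lemma sm_mk_block_snd M c a n k :
  (forall i, (a <= i < a + n)%nat -> kind M i = k) ->
  sm snd (map (mk M c) (seq a n)) = szk c k * INR n.
Proof.
  intros H. rewrite (sm_ext snd (fun x => (fun (_ : nat) (s : R) => s) (kind M (fst x)) (snd x))) by auto.
  apply (sm_mk_block M c (fun _ s => s)); auto.
Qed.

Lemma cost_sig0 M c : sm (ucost M c) (sig0 M c) = 2 * INR M.
Proof.
  unfold sig0. rewrite sm_app, !sm_ucost_ins, !sm_sz_mk.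
  assert (H1 : sm snd (map (mk M c) (seq 0 (4*M))) = (szk c 0 + szk c 1 + szk c 2 + szk c 3) * INR M).
  { rewrite (sm_ext snd (fun x => (fun (_ : nat) (s : R) => s) (kind M (fst x)) (snd x))) by auto.
    apply (sm_kind_BL M c (fun _ s => s)). }
  rewrite H1.
  rewrite (sm_mk_block_snd M c (4*M) (2*M) 4) by (intros; kindtac).
  unfold szk. rewrite mult_INR. simpl INR. lra.
Qed.

Lemma cost_G M c : sm (sz M c) (seq (6*M) (2*M)) = 2 * c * INR M.
Proof.
  rewrite sm_sz_mk, seq_G, map_app, sm_app.
  rewrite (sm_mk_block_snd M c (6*M) M 5) by (intros; kindtac).
  rewrite (sm_mk_block_snd M c (7*M) M 6) by (intros; kindtac).
  unfold szk. lra.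
Qed.

Lemma cost_A M c : sm (sz M c) (seq (4*M) (2*M)) = 2 * c * INR M.
Proof.
  rewrite sm_sz_mk. rewrite (sm_mk_block_snd M c (4*M) (2*M) 4) by (intros; kindtac).
  unfold szk. rewrite mult_INR. simpl INR. lra.
Qed.

Lemma cost_rounds M c r : sm (ucost M c) (rounds M c r) = INR r * (8 * c * INR M).
Proof.
  induction r. simpl. rewrite sm_nil; lra.
  cbn [rounds]. rewrite !sm_app, IHr. unfold half1, half2.
  rewrite !sm_app, !sm_ucost_ins, !sm_ucost_del, cost_G, cost_A. rewrite S_INR. lra.
Qed.


Lemma sm3 M c i j k : sm snd [mk M c i; mk M c j; mk M c k] = sz M c i + sz M c j + sz M c k.
Proof. unfold mk. rewrite !sm_cons, sm_nil. simpl. lra. Qed.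

Definition gA M i := if (i <? 2*M)%nat then i else if (i <? 4*M)%nat then (i - 2*M)%nat else (i - 4*M)%nat.
Definition gB M i := if (i <? 2*M)%nat then i else if (i <? 3*M)%nat then (i - M)%nat
  else if (i <? 4*M)%nat then (i - 3*M)%nat else if (i <? 7*M)%nat then (i - 5*M)%nat else (i - 7*M)%nat.

Ltac ltbtac := repeat match goal with
  | |- context [Nat.ltb ?a ?b] => destruct (Nat.ltb_spec a b)
  | H : context [Nat.ltb ?a ?b] |- _ => destruct (Nat.ltb_spec a b) end.

Lemma pack_A M c h : 0 < c <= 1/40 -> canon M c (cur h) -> stA M (cur h) -> packable (sizes h) (2*M).
Proof.
  intros Hc Hcan Hs. apply (packable_of_lab _ _ (gA M)).
  - intros x Hx. assert (present (fst x) (cur h)) by (apply in_map; auto). apply Hs in H.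
    unfold gA; ltbtac; lia.
  - intros b Hb.
    eapply Rle_trans. apply (sm_sub snd _ [mk M c b; mk M c (2*M + b); mk M c (4*M + b)]).
    + apply NoDup_filter, nodup_fst_nodup, cur_nodup.
    + intros x Hx. apply filter_In in Hx as [Hx E]. apply Nat.eqb_eq in E.
      assert (present (fst x) (cur h)) by (apply in_map; auto). apply Hs in H.
      rewrite (canon_in M c _ x Hcan Hx). unfold gA in E.
      destruct (Nat.ltb_spec (fst x) (2*M)); [left; f_equal; lia|].
      destruct (Nat.ltb_spec (fst x) (4*M)); [right; left; f_equal; lia|].
      right; right; left; f_equal; lia.
    + intros x [<-|[<-|[<-|[]]]]; apply szk_bounds; auto.
    + rewrite sm3. unfold sz. destruct (Nat.ltb_spec b M).
      * replace (kind M b) with 0%nat by kindtac. replace (kind M (2*M+b)) with 2%nat by kindtac.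
        replace (kind M (4*M+b)) with 4%nat by kindtac. simpl. lra.
      * replace (kind M b) with 1%nat by kindtac. replace (kind M (2*M+b)) with 3%nat by kindtac.
        replace (kind M (4*M+b)) with 4%nat by kindtac. simpl. lra.
Qed.

Lemma pack_B M c h : 0 < c <= 1/40 -> canon M c (cur h) -> stB M (cur h) -> packable (sizes h) (2*M).
Proof.
  intros Hc Hcan Hs. apply (packable_of_lab _ _ (gB M)).
  - intros x Hx. assert (present (fst x) (cur h)) by (apply in_map; auto). apply Hs in H.
    unfold gB; ltbtac; lia.
  - intros b Hb. destruct (Nat.ltb_spec b M).
    + eapply Rle_trans. apply (sm_sub snd _ [mk M c b; mk M c (3*M + b); mk M c (7*M + b)]).
      * apply NoDup_filter, nodup_fst_nodup, cur_nodup.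
      * intros x Hx. apply filter_In in Hx as [Hx E]. apply Nat.eqb_eq in E.
        assert (present (fst x) (cur h)) by (apply in_map; auto). apply Hs in H0.
        rewrite (canon_in M c _ x Hcan Hx). unfold gB in E.
        destruct (Nat.ltb_spec (fst x) (2*M)); [left; f_equal; lia|].
        destruct (Nat.ltb_spec (fst x) (3*M)); [lia|].
        destruct (Nat.ltb_spec (fst x) (4*M)); [right; left; f_equal; lia|].
        destruct (Nat.ltb_spec (fst x) (7*M)); [lia|].
        right; right; left; f_equal; lia.
      * intros x [<-|[<-|[<-|[]]]]; apply szk_bounds; auto.
      * rewrite sm3. unfold sz.
        replace (kind M b) with 0%nat by kindtac. replace (kind M (3*M+b)) with 3%nat by kindtac.
        replace (kind M (7*M+b)) with 6%nat by kindtac. simpl. lra.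
    + eapply Rle_trans. apply (sm_sub snd _ [mk M c b; mk M c (M + b); mk M c (5*M + b)]).
      * apply NoDup_filter, nodup_fst_nodup, cur_nodup.
      * intros x Hx. apply filter_In in Hx as [Hx E]. apply Nat.eqb_eq in E.
        assert (present (fst x) (cur h)) by (apply in_map; auto). apply Hs in H0.
        rewrite (canon_in M c _ x Hcan Hx). unfold gB in E.
        destruct (Nat.ltb_spec (fst x) (2*M)); [left; f_equal; lia|].
        destruct (Nat.ltb_spec (fst x) (3*M)); [right; left; f_equal; lia|].
        destruct (Nat.ltb_spec (fst x) (4*M)); [lia|].
        destruct (Nat.ltb_spec (fst x) (7*M)); [right; right; left; f_equal; lia|].
        lia.
      * intros x [<-|[<-|[<-|[]]]]; apply szk_bounds; auto.
      * rewrite sm3. unfold sz.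
        replace (kind M b) with 1%nat by kindtac. replace (kind M (M+b)) with 2%nat by kindtac.
        replace (kind M (5*M+b)) with 5%nat by kindtac. simpl. lra.
Qed.

Lemma len_cur_A M c h : canon M c (cur h) -> stA M (cur h) -> length (cur h) = (6*M)%nat.
Proof.
  intros Hc Hs. rewrite (Permutation_length (perm_A M c (cur h) (cur_nodup h) Hc Hs)).
  unfold Ea. rewrite length_map, length_seq. auto.
Qed.
Lemma len_cur_B M c h : canon M c (cur h) -> stB M (cur h) -> length (cur h) = (6*M)%nat.
Proof.
  intros Hc Hs. rewrite (Permutation_length (perm_B M c (cur h) (cur_nodup h) Hc Hs)).
  unfold Eb. rewrite length_map, length_app, !length_seq. lia.
Qed.

Lemma chk_bins M c A eps f h : 0 < c <= 1/40 -> 0 < eps -> competitive_fn A (1 + eps) f -> wf h ->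
  canon M c (cur h) -> (stA M (cur h) \/ stB M (cur h)) ->
  INR (bins_used A h) - 2 * INR M <= eps * (2 * INR M) + f (6 * M)%nat.
Proof.
  intros Hc He Hcomp Hw Hcan Hs. specialize (Hcomp h Hw).
  assert (Hopt : (OPT (sizes h) <= 2 * M)%nat).
  { apply OPT_le. destruct Hs; [apply (pack_A M c)|apply (pack_B M c)]; auto. }
  apply le_INR in Hopt. rewrite mult_INR in Hopt. simpl INR in Hopt.
  replace (length (cur h)) with (6*M)%nat in Hcomp by (destruct Hs; symmetry; [apply (len_cur_A M c)|apply (len_cur_B M c)]; auto).
  assert ((1 + eps) * INR (OPT (sizes h)) <= (1 + eps) * (2 * INR M)) by (apply Rmult_le_compat_l; lra).
  lra.
Qed.

Lemma GG_diff M c A eps f hA hB : 0 < eps <= 1/4000 -> c = 100 * eps ->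
  valid_alg A -> competitive_fn A (1 + eps) f -> f (6 * M)%nat <= eps * INR (6 * M) ->
  wf hA -> wf hB -> canon M c (cur hA) -> canon M c (cur hB) -> stA M (cur hA) -> stB M (cur hB) ->
  GG M A hA - GG M A hB >= 5/4 * INR M.
Proof.
  intros He Ec Hv Hcomp Hf WA WB CA CB SA SB.
  assert (Hc : 0 < c <= 1/40) by lra.
  pose proof (chk_bins M c A eps f hA Hc ltac:(lra) Hcomp WA CA (or_introl SA)) as BA.
  pose proof (chk_bins M c A eps f hB Hc ltac:(lra) Hcomp WB CB (or_intror SB)) as BB.
  pose proof (G_alpha M c A hA Hc (Hv hA WA) CA SA) as GA.
  pose proof (G_beta M c A hB Hc (Hv hB WB) CB SB) as GB.
  rewrite mult_INR in Hf. simpl INR in Hf.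
  pose proof (pos_INR M).
  set (l1 := 5 / (2 * c)) in *. set (l2 := 5 / c) in *.
  assert (L1 : l1 * eps = 1/40) by (unfold l1; rewrite Ec; field; lra).
  assert (L2 : l2 * eps = 1/20) by (unfold l2; rewrite Ec; field; lra).
  assert (l1 > 0) by (unfold l1; apply Rdiv_lt_0_compat; lra).
  assert (l2 > 0) by (unfold l2; apply Rdiv_lt_0_compat; lra).
  set (B1 := INR (bins_used A hA)) in *. set (B2 := INR (bins_used A hB)) in *.
  assert (X1 : l1 * (B1 - 2 * INR M) <= l1 * (8 * eps * INR M)) by (apply Rmult_le_compat_l; lra).
  assert (X2 : l2 * (B2 - 2 * INR M) <= l2 * (8 * eps * INR M)) by (apply Rmult_le_compat_l; lra).
  replace (l1 * (8 * eps * INR M)) with (8 * INR M * (l1 * eps)) in X1 by ring.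
  replace (l2 * (8 * eps * INR M)) with (8 * INR M * (l2 * eps)) in X2 by ring.
  rewrite L1 in X1. rewrite L2 in X2.
  assert (3 * c * (2 * INR M) <= 3/20 * INR M) by (rewrite Ec; nra).
  lra.
Qed.

Lemma BL_nodup M c : NoDup (BL M c).
Proof. apply nodup_fst_nodup. unfold BL. rewrite map_map. simpl. rewrite map_id. apply seq_NoDup. Qed.

Lemma move_half M c A h s : 0 < c <= 1/40 -> Forall (canu M c) (h ++ s) ->
  (forall t i, (t <= length s)%nat -> (i < 4*M)%nat -> present i (cur (h ++ firstn t s))) ->
  2/5 * sm (mvd A h (h ++ s)) (BL M c) <= mvI A h s.
Proof.
  intros Hc Hf Hp.
  assert (Hcan : forall t, canon M c (cur (h ++ firstn t s))).
  { intros t. apply canon_cur. apply Forall_app in Hf as [Hf1 Hf2]. apply Forall_app; split; auto.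
    rewrite Forall_forall in *. intros u Hu. apply In_firstn in Hu; auto. }
  eapply Rle_trans. 2: apply mv_lower.
  - rewrite <- sm_scal. apply sm_le. intros x Hx. unfold BL in Hx. apply in_map_iff in Hx as (i & <- & Hi).
    apply in_seq in Hi. unfold mvd, mk; simpl. unfold sz.
    assert (2/5 <= szk c (kind M i)) by (apply szk_big; auto; kindtac).
    pose proof (indb_01 (negb (Nat.eqb (A h i) (A (h ++ s) i)))). nra.
  - apply BL_nodup.
  - intros t Ht x Hx. unfold BL in Hx. apply in_map_iff in Hx as (i & <- & Hi). apply in_seq in Hi.
    pose proof (Hp t i Ht ltac:(lia)) as Hpi. apply present_iff in Hpi as (s0 & Hs0).
    pose proof (Hcan t _ Hs0) as E. simpl in E. subst. exact Hs0.
  - intros t x Ht Hx. rewrite (Hcan t x Hx). apply szk_bounds; auto.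
Qed.

Lemma mvI_nonneg M c A h s : 0 < c <= 1/40 -> Forall (canu M c) (h ++ s) -> 0 <= mvI A h s.
Proof.
  intros Hc Hf.
  assert (Hcan : forall t, canon M c (cur (h ++ firstn t s))).
  { intros t. apply canon_cur. apply Forall_app in Hf as [Hf1 Hf2]. apply Forall_app; split; auto.
    rewrite Forall_forall in *. intros u Hu. apply In_firstn in Hu; auto. }
  pose proof (mv_lower A h s [] (NoDup_nil _)) as H. rewrite sm_nil in H. apply H.
  - intros t _ x [].
  - intros t x Ht Hx. rewrite (Hcan t x Hx). apply szk_bounds; auto.
Qed.

Lemma mvd_sym A h1 h2 x : mvd A h1 h2 x = mvd A h2 h1 x.
Proof. unfold mvd. rewrite Nat.eqb_sym. auto. Qed.

Lemma round_move M c A eps f r : 0 < eps <= 1/4000 -> c = 100 * eps ->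
  valid_alg A -> competitive_fn A (1 + eps) f -> f (6 * M)%nat <= eps * INR (6 * M) ->
  INR M <= mvI A (sig0 M c ++ rounds M c r) (half1 M c ++ half2 M c).
Proof.
  intros He Ec Hv Hcomp Hf. assert (Hc : 0 < c <= 1/40) by lra.
  set (hA := sig0 M c ++ rounds M c r). set (hB := hA ++ half1 M c). set (hA' := hB ++ half2 M c).
  assert (Wfull : wf (hA ++ half1 M c ++ half2 M c)).
  { unfold hA. rewrite <- app_assoc. apply (wf_adv M c (S r)); auto. }
  assert (WA : wf hA) by (apply (wf_prefix _ _ Wfull)).
  assert (WB : wf hB) by (unfold hB; rewrite app_assoc in Wfull; apply (wf_prefix _ _ Wfull)).
  assert (WA' : wf hA') by (unfold hA', hB; rewrite <- app_assoc; auto).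
  assert (Ffull : Forall (canu M c) (hA ++ half1 M c ++ half2 M c)).
  { unfold hA. rewrite <- app_assoc. apply (canu_adv M c (S r)). }
  assert (FA : Forall (canu M c) hA) by (apply Forall_app in Ffull; tauto).
  assert (FB : Forall (canu M c) hB) by (unfold hB; rewrite app_assoc in Ffull; apply Forall_app in Ffull; tauto).
  assert (FA' : Forall (canu M c) hA') by (unfold hA', hB; rewrite <- app_assoc; auto).
  assert (SA : stA M (cur hA)) by (unfold hA; rewrite cur_app; apply stA_rounds, stA_sig0).
  assert (SB : stB M (cur hB)) by (unfold hB; rewrite cur_app; apply stB_half1; auto).
  assert (SA' : stA M (cur hA')) by (unfold hA'; rewrite cur_app; apply stA_half2; auto).
  pose proof (GG_diff M c A eps f hA hB He Ec Hv Hcomp Hf WA WB (canon_cur _ _ _ FA) (canon_cur _ _ _ FB) SA SB) as D1.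
  pose proof (GG_diff M c A eps f hA' hB He Ec Hv Hcomp Hf WA' WB (canon_cur _ _ _ FA') (canon_cur _ _ _ FB) SA' SB) as D2.
  pose proof (GG_move M c A hA hB Hc (Hv hA WA) (canon_cur _ _ _ FA) (canon_cur _ _ _ FB) SA SB) as M1.
  pose proof (GG_move M c A hA' hB Hc (Hv hA' WA') (canon_cur _ _ _ FA') (canon_cur _ _ _ FB) SA' SB) as M2.
  rewrite mvI_app.
  assert (K1 : 2/5 * sm (mvd A hA hB) (BL M c) <= mvI A hA (half1 M c)).
  { apply move_half; [auto|exact FB|]. intros t i Ht Hi. rewrite cur_app. apply keep_half1; auto. }
  assert (K2 : 2/5 * sm (mvd A hB hA') (BL M c) <= mvI A (hA ++ half1 M c) (half2 M c)).
  { fold hB. apply move_half; [auto|exact FA'|]. intros t i Ht Hi. rewrite cur_app. apply keep_half2; auto. }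
  rewrite (sm_ext (mvd A hB hA') (mvd A hA' hB)) in K2 by (intros; apply mvd_sym).
  lra.
Qed.

Lemma rounds_move M c A eps f Rn : 0 < eps <= 1/4000 -> c = 100 * eps ->
  valid_alg A -> competitive_fn A (1 + eps) f -> f (6 * M)%nat <= eps * INR (6 * M) ->
  INR Rn * INR M <= mvI A (sig0 M c) (rounds M c Rn).
Proof.
  intros He Ec Hv Hcomp Hf. induction Rn.
  - simpl. unfold mvI. simpl. rewrite sm_nil. lra.
  - cbn [rounds]. rewrite mvI_app. rewrite S_INR.
    pose proof (round_move M c A eps f Rn He Ec Hv Hcomp Hf). lra.
Qed.

Lemma upd_cost_nonneg M c prev u : 0 < c <= 1/40 -> canon M c (cur prev) -> canu M c u -> 0 <= upd_cost prev u.
Proof.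
  intros Hc Hcan Hu. destruct u as [i s|i]; simpl in *.
  - subst. apply szk_bounds; auto.
  - fold (sm snd (filter (fun p => Nat.eqb (fst p) i) (cur prev))). apply sm_nonneg.
    intros x Hx. apply filter_In in Hx as [Hx _]. rewrite (Hcan x Hx). apply szk_bounds; auto.
Qed.

Lemma total_cost_nonneg M c s : 0 < c <= 1/40 -> Forall (canu M c) s -> 0 <= total_cost s.
Proof.
  intros Hc Hf. unfold total_cost. fold (sm (fun t => upd_cost (firstn t s) (nth t s (Del 0))) (seq 0 (length s))).
  apply sm_nonneg. intros t Ht. apply in_seq in Ht. apply (upd_cost_nonneg M c); auto.
  - apply canon_cur. apply Forall_forall. intros u Hu. apply In_firstn in Hu. rewrite Forall_forall in Hf. auto.
  - rewrite Forall_forall in Hf. apply Hf. apply nth_In. lia.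
Qed.

Theorem part2 : exists c : R, 0 < c /\
     forall delta : R, 0 < delta ->
       exists eps : R, 0 < eps < delta /\
         forall (A : algorithm) (f : nat -> R) (gamma : R),
           valid_alg A -> little_o f -> competitive_fn A (1 + eps) f ->
           recourse A gamma -> c / eps <= gamma.
Proof.
  exists (1/1000). split; [lra|]. intros delta Hd.
  destruct (archimed_cor1 delta Hd) as (N & HN & HN0).
  set (m := (N + 4000)%nat).
  assert (Hm : INR m = INR N + 4000).
  { unfold m; rewrite plus_INR. f_equal. replace 4000%nat with (Pos.to_nat 4000) by reflexivity. rewrite INR_IPR. reflexivity. }
  assert (HN1 : 1 <= INR N) by (replace 1 with (INR 1) by reflexivity; apply le_INR; lia).
  exists (/ INR m). split.
  { split. apply Rinv_0_lt_compat; lra.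
    eapply Rlt_trans; [|exact HN]. apply Rinv_lt_contravar; nra. }
  intros A f gamma Hv Ho Hcomp Hrec.
  set (eps := / INR m).
  assert (Heps : eps * INR m = 1) by (unfold eps; field; lra).
  assert (He : 0 < eps <= 1/4000).
  { split. unfold eps; apply Rinv_0_lt_compat; lra. nra. }
  destruct (Ho eps (proj1 He)) as (N0 & HN0').
  set (M := S N0). set (c := 100 * eps).
  assert (Hc : 0 < c <= 1/40) by (unfold c; lra).
  assert (Hf : f (6 * M)%nat <= eps * INR (6 * M)) by (apply HN0'; unfold M; lia).
  assert (HM : 1 <= INR M) by (replace 1 with (INR 1) by reflexivity; apply le_INR; unfold M; lia).
  pose proof (Hrec (adv M c m) (wf_adv M c m Hc)) as Hr.
  rewrite total_move_mvI in Hr. unfold adv in Hr. rewrite mvI_app, app_nil_l in Hr.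
  pose proof (mvI_nonneg M c A [] (sig0 M c) Hc ltac:(apply canu_sig0)) as P0.
  pose proof (rounds_move M c A eps f m He eq_refl Hv Hcomp Hf) as P1.
  pose proof (total_cost_le M c (sig0 M c ++ rounds M c m) Hc (canu_adv M c m)) as TC.
  pose proof (total_cost_nonneg M c (sig0 M c ++ rounds M c m) Hc (canu_adv M c m)) as TC0.
  rewrite sm_app, cost_sig0, cost_rounds in TC.
  assert (TCb : total_cost (sig0 M c ++ rounds M c m) <= 802 * INR M).
  { replace (INR m * (8 * c * INR M)) with (800 * INR M * (eps * INR m)) in TC by (unfold c; ring).
    rewrite Heps in TC. lra. }
  set (TCv := total_cost (sig0 M c ++ rounds M c m)) in *.
  assert (Hmv : INR m * INR M <= gamma * TCv) by lra.
  destruct (Rle_lt_dec gamma 0) as [Hg|Hg].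
  { assert (gamma * TCv <= 0) by nra. nra. }
  assert (INR m * INR M <= gamma * (802 * INR M)) by nra.
  assert (INR m <= 802 * gamma) by nra.
  replace (1 / 1000 / eps) with (INR m / 1000) by (unfold eps; field; lra).
  lra.
Qed.

Fixpoint pos (i : nat) (l : list (nat * R)) : nat :=
  match l with [] => 0%nat | x :: l => if Nat.eqb (fst x) i then 0%nat else S (pos i l) end.

Lemma pos_lt i l : In i (map fst l) -> (pos i l < length l)%nat.
Proof.
  induction l as [|x l IH]; simpl; intros H; [tauto|].
  destruct (Nat.eqb_spec (fst x) i); [lia|]. destruct H; [contradiction|]. specialize (IH H); lia.
Qed.

Lemma nth_pos l x d : NoDup (map fst l) -> In x l -> nth (pos (fst x) l) l d = x.
Proof.
  induction l as [|y l IH]; simpl; intros ND H; [tauto|]. inversion ND; subst.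
  destruct (Nat.eqb_spec (fst y) (fst x)).
  - destruct H as [<-|H]; auto. exfalso; apply H2. rewrite e. apply in_map; auto.
  - destruct H as [<-|H]; [congruence|]. apply IH; auto.
Qed.

Lemma pos_nth l j d : NoDup (map fst l) -> (j < length l)%nat -> pos (fst (nth j l d)) l = j.
Proof.
  revert j; induction l as [|y l IH]; intros j ND Hj; simpl in Hj; [lia|]. inversion ND; subst.
  destruct j; simpl. rewrite Nat.eqb_refl; auto.
  destruct (Nat.eqb_spec (fst y) (fst (nth j l d))).
  - exfalso. apply H1. rewrite e. apply in_map, nth_In. lia.
  - rewrite IH; auto; lia.
Qed.

Definition ld (L : list (nat * R)) (g : nat -> nat) (b : nat) := sm snd (filter (fun x => Nat.eqb (g (fst x)) b) L).
Definition pkv (L : list (nat * R)) (g : nat -> nat) (k : nat) :=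
  (forall x, In x L -> (g (fst x) < k)%nat) /\ forall b, ld L g b <= 1.

Lemma ld_zero L g b : (forall x, In x L -> g (fst x) <> b) -> ld L g b = 0.
Proof.
  intros H. unfold ld. rewrite sm_filter. transitivity (sm (fun _ => 0) L); [|apply sm_zero]. apply sm_ext. intros x Hx.
  destruct (Nat.eqb_spec (g (fst x)) b); auto. exfalso; apply (H x); auto.
Qed.

Lemma lab_of_packable l k : NoDup (map fst l) -> packable (map snd l) k -> exists g, pkv l g k.
Proof.
  intros ND (f & Hf1 & Hf2). exists (fun i => f (pos i l)). split.
  - intros x Hx. apply Hf1. rewrite length_map. apply pos_lt. apply in_map; auto.
  - intros b. destruct (Nat.lt_ge_cases b k) as [Hb|Hb].
    + specialize (Hf2 b Hb). rewrite length_map in Hf2. unfold ld.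
      unfold sm. rewrite <- (map_nth_filter_seq snd (fun x => Nat.eqb (f (pos (fst x) l)) b) l (0%nat, 0)).
      erewrite filter_ext_in.
      2: { intros j Hj. apply in_seq in Hj. rewrite pos_nth by (auto; lia). reflexivity. }
      erewrite map_ext. apply Hf2. intros j. symmetry. apply (map_nth snd l (0%nat, 0) j).
    + rewrite ld_zero. lra. intros x Hx E. assert (f (pos (fst x) l) < k)%nat; [|lia].
      apply Hf1. rewrite length_map. apply pos_lt. apply in_map; auto.
Qed.

Lemma packable_of_pkv l g k : pkv l g k -> packable (map snd l) k.
Proof. intros [H1 H2]. apply (packable_of_lab l k g); auto. intros b _; apply H2. Qed.

Lemma vol_le_packable (l : list R) k : packable l k -> sumR l <= INR k.
Proof.
  intros (f & Hf1 & Hf2).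
  pose proof (partition_sum_gen f (fun j => nth j l 0) (seq 0 k) (seq 0 (length l)) (seq_NoDup _ _)) as P.
  rewrite (sm_ext _ (fun j => nth j l 0)) in P.
  2: { intros j Hj. apply in_seq in Hj. destruct in_dec as [|n]; auto. exfalso; apply n. apply in_seq. specialize (Hf1 j ltac:(lia)). lia. }
  unfold sm at 2 in P. rewrite (map_nth_seq (fun x => x) l 0) in P. rewrite map_id in P.
  rewrite <- P. replace (INR k) with (sm (fun _ : nat => 1) (seq 0 k)).
  2: { rewrite sm_const, length_seq. lra. }
  apply sm_le. intros b Hb. apply in_seq in Hb. apply Hf2. lia.
Qed.

Definition updf (g : nat -> nat) (i v : nat) := fun j => if Nat.eqb j i then v else g j.

Lemma ld_cons_upd L g x v b : ~ In (fst x) (map fst L) ->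
  ld (x :: L) (updf g (fst x) v) b = (if Nat.eqb v b then snd x else 0) + ld L g b.
Proof.
  intros Hn. unfold ld. cbn [filter]. unfold updf at 1. rewrite Nat.eqb_refl.
  rewrite (filter_ext_in _ (fun y => Nat.eqb (g (fst y)) b) L).
  - destruct (Nat.eqb v b); rewrite ?sm_cons; lra.
  - intros y Hy. unfold updf. destruct (Nat.eqb_spec (fst y) (fst x)); auto.
    exfalso; apply Hn; rewrite <- e; apply in_map; auto.
Qed.

Definition nfinv L g k := pkv L g k /\ (k = 0%nat \/ exists o, (o < k)%nat /\ forall b, (b < k)%nat -> b <> o -> ld L g b > 1/2).

Lemma nf_inv L : NoDup (map fst L) -> (forall x, In x L -> 0 <= snd x <= 1) -> exists g k, nfinv L g k.
Proof.
  induction L as [|x L IH]; intros ND Hs.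
  - exists (fun _ => 0%nat), 0%nat. split; [split|left; auto].
    + intros x [].
    + intros b. unfold ld; simpl. rewrite sm_nil; lra.
  - inversion ND; subst. destruct IH as (g & k & (P1 & P2) & Hinv); auto.
    { intros; apply Hs; right; auto. }
    assert (Hx : 0 <= snd x <= 1) by (apply Hs; left; auto).
    assert (Hk : ld L g k = 0) by (apply ld_zero; intros y Hy E; specialize (P1 y Hy); lia).
    destruct Hinv as [K0|(o & Ho & Hb)].
    + subst k. exists (updf g (fst x) 0), 1%nat. split; [split|].
      * intros y [<-|Hy]. unfold updf; rewrite Nat.eqb_refl; lia. specialize (P1 y Hy); lia.
      * intros b. rewrite ld_cons_upd by auto.
        rewrite (ld_zero L g b) by (intros y Hy; specialize (P1 y Hy); lia).
        destruct (Nat.eqb 0 b); lra.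
      * right. exists 0%nat. split; [lia|]. intros b Hb1 Hb2; lia.
    + destruct (Rle_dec (ld L g o + snd x) 1) as [Fit|NFit].
      * exists (updf g (fst x) o), k. split; [split|].
        -- intros y [<-|Hy]. unfold updf; rewrite Nat.eqb_refl; lia.
           unfold updf. destruct (Nat.eqb_spec (fst y) (fst x)). exfalso; apply H1; rewrite <- e; apply in_map; auto. apply P1; auto.
        -- intros b. rewrite ld_cons_upd by auto. destruct (Nat.eqb_spec o b); subst; [lra|]. specialize (P2 b). lra.
        -- right. exists o. split; auto. intros b Hb1 Hb2. rewrite ld_cons_upd by auto.
           destruct (Nat.eqb_spec o b); [congruence|]. specialize (Hb b Hb1 Hb2). lra.
      * exists (updf g (fst x) k), (S k). split; [split|].
        -- intros y [<-|Hy]. unfold updf; rewrite Nat.eqb_refl; lia.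
           unfold updf. destruct (Nat.eqb_spec (fst y) (fst x)). exfalso; apply H1; rewrite <- e; apply in_map; auto. specialize (P1 y Hy); lia.
        -- intros b. rewrite ld_cons_upd by auto. destruct (Nat.eqb_spec k b); subst. rewrite Hk; lra. specialize (P2 b). lra.
        -- right. destruct (Rlt_dec (1/2) (ld L g o)) as [Big|Small].
           ++ exists k. split; [lia|]. intros b Hb1 Hb2. rewrite ld_cons_upd by auto.
              destruct (Nat.eqb_spec k b); [congruence|].
              destruct (Nat.eq_dec b o); [subst; lra|]. specialize (Hb b ltac:(lia) n0). lra.
           ++ exists o. split; [lia|]. intros b Hb1 Hb2. rewrite ld_cons_upd by auto.
              destruct (Nat.eqb_spec k b). subst. rewrite Hk. lra.
              specialize (Hb b ltac:(lia) Hb2). lra.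
Qed.

Lemma vol_partition L g k : (forall x, In x L -> (g (fst x) < k)%nat) ->
  sm snd L = sm (fun b => ld L g b) (seq 0 k).
Proof.
  intros H. unfold ld. unfold sm at 2.
  rewrite (partition_sum_gen (fun x => g (fst x)) snd (seq 0 k) L (seq_NoDup _ _)).
  apply sm_ext. intros x Hx. destruct in_dec as [|n]; auto. exfalso; apply n. apply in_seq. specialize (H x Hx); lia.
Qed.

Lemma nf_static L : NoDup (map fst L) -> (forall x, In x L -> 0 <= snd x <= 1) ->
  exists g k, pkv L g k /\ INR k <= 2 * sm snd L + 1.
Proof.
  intros ND Hs. destruct (nf_inv L ND Hs) as (g & k & Pk & Hinv). exists g, k. split; auto.
  assert (V0 : 0 <= sm snd L) by (apply sm_nonneg; intros x Hx; apply Hs; auto).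
  destruct Hinv as [->|(o & Ho & Hb)]. simpl; lra.
  rewrite (vol_partition L g k) by (apply Pk).
  assert (sm (fun b => ld L g b) (seq 0 k) >= sm (fun b => 1/2 - 1/2 * indb (Nat.eqb o b)) (seq 0 k)).
  { apply Rle_ge, sm_le. intros b Hbs. apply in_seq in Hbs. destruct (Nat.eqb_spec o b); simpl indb.
    - subst. destruct Pk as [_ P2]. unfold ld. assert (0 <= sm snd (filter (fun x => Nat.eqb (g (fst x)) b) L)).
      apply sm_nonneg. intros x Hx. apply filter_In in Hx. apply Hs; tauto. lra.
    - specialize (Hb b ltac:(lia) ltac:(auto)). lra. }
  rewrite sm_minus, sm_const, sm_scal, length_seq in H.
  unfold indb in H. unfold sm in H at 2. rewrite sum_eqb_nodup in H by apply seq_NoDup.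
  destruct in_dec as [|n]. lra. exfalso; apply n; apply in_seq; lia.
Qed.

Lemma bins_le {X} (lab : X -> nat) l K : (forall x, In x l -> (lab x <= K)%nat) -> (length (labs lab l) <= S K)%nat.
Proof.
  intros H. replace (S K) with (length (seq 0 (S K))) by apply length_seq.
  apply NoDup_incl_length. apply NoDup_nodup.
  intros b Hb. apply nodup_In, in_map_iff in Hb as (x & <- & Hx). apply in_seq. specialize (H x Hx). lia.
Qed.

Record st := mkst { slab : nat -> nat; sI0 : list (nat * R); sk0 : nat; sV0 : R; sU : R; sW : R;
  snfb : nat; snfl : R; sPd : nat -> bool; sNl : list (nat * R) }.

Definition ucostL (l : list (nat * R)) (u : update) : R :=
  match u with Ins _ s => s | Del i => sumR (map snd (filter (fun p => Nat.eqb (fst p) i) l)) end.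

Lemma upd_cost_ucostL h u : upd_cost h u = ucostL (cur h) u.
Proof. reflexivity. Qed.

Definition optlab (l : list (nat * R)) : nat -> nat :=
  epsilon (inhabits (fun _ => 0%nat)) (fun g => pkv l g (OPT (map snd l))).

Definition repack (l : list (nat * R)) : st :=
  mkst (optlab l) l (OPT (map snd l)) (sm snd l) 0 0 0 0 (fun _ => true) [].

Definition trans (d : R) (q : st) (l : list (nat * R)) (u : update) : st :=
  let U' := sU q + ucostL l u in
  if Rle_dec (d * sV0 q) U' then repack (step l u) else
  match u with
  | Ins i s =>
    if Rle_dec (snfl q + s) 1 then
      mkst (updf (slab q) i (sk0 q + snfb q)) (sI0 q) (sk0 q) (sV0 q) U' (sW q + s) (snfb q) (snfl q + s)
        (fun j => sPd q j && negb (Nat.eqb j i)) ((i, s) :: drop_id i (sNl q))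
    else
      mkst (updf (slab q) i (sk0 q + S (snfb q))) (sI0 q) (sk0 q) (sV0 q) U' (sW q + s) (S (snfb q)) s
        (fun j => sPd q j && negb (Nat.eqb j i)) ((i, s) :: drop_id i (sNl q))
  | Del i =>
      mkst (slab q) (sI0 q) (sk0 q) (sV0 q) U' (sW q) (snfb q) (snfl q)
        (fun j => sPd q j && negb (Nat.eqb j i)) (drop_id i (sNl q))
  end.

Definition init : st := mkst (fun _ => 0%nat) [] 0 0 0 0 0 0 (fun _ => true) [].

Definition stepp (d : R) (p : st * list (nat * R)) (u : update) := (trans d (fst p) (snd p) u, step (snd p) u).
Definition run (d : R) (h : list update) := fold_left (stepp d) h (init, []).
Definition alg (d : R) : algorithm := fun h i => slab (fst (run d h)) i.

Lemma run_snoc d h u : run d (h ++ [u]) = stepp d (run d h) u.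
Proof. unfold run. rewrite fold_left_app. reflexivity. Qed.

Lemma run_snd d h : snd (run d h) = cur h.
Proof.
  induction h as [|u h IH] using rev_ind; auto.
  rewrite run_snoc, cur_snoc. simpl. rewrite IH. auto.
Qed.

Lemma run_fst_snoc d h u : fst (run d (h ++ [u])) = trans d (fst (run d h)) (cur h) u.
Proof. rewrite run_snoc. simpl. rewrite run_snd. auto. Qed.

Lemma total_move_snoc A h u : total_move A (h ++ [u]) = total_move A h + move_cost A h (h ++ [u]).
Proof. rewrite !total_move_mvI, mvI_app, mvI_single. simpl. auto. Qed.

Lemma total_cost_snoc h u : total_cost (h ++ [u]) = total_cost h + upd_cost h u.
Proof.
  unfold total_cost. fold (sm (fun t => upd_cost (firstn t (h ++ [u])) (nth t (h ++ [u]) (Del 0))) (seq 0 (length (h ++ [u])))).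
  fold (sm (fun t => upd_cost (firstn t h) (nth t h (Del 0))) (seq 0 (length h))).
  rewrite length_app. simpl length. rewrite seq_app, sm_app. simpl seq. rewrite sm_cons, sm_nil.
  f_equal.
  - apply sm_ext. intros t Ht. apply in_seq in Ht. rewrite app_nth1 by lia. rewrite firstn_app.
    replace (t - length h)%nat with 0%nat by lia. rewrite firstn_O, app_nil_r. auto.
  - rewrite nth_middle.
    assert (E : firstn (length h) (h ++ [u]) = h).
    { rewrite firstn_app, Nat.sub_diag, firstn_O, app_nil_r. apply firstn_all. }
    simpl plus. rewrite E. lra.
Qed.

Lemma wf_last h u : wf (h ++ [u]) ->
  match u with Ins i s => 0 <= s <= 1 /\ ~ present i (cur h) | Del i => present i (cur h) end.
Proof.
  intros H. specialize (H (length h)). rewrite length_app in H. simpl in H.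
  rewrite nth_middle in H.
  assert (E : firstn (length h) (h ++ [u]) = h).
  { rewrite firstn_app, Nat.sub_diag, firstn_O, app_nil_r. apply firstn_all. }
  rewrite E in H. apply H. lia.
Qed.

Lemma wf_pre h u : wf (h ++ [u]) -> wf h.
Proof. apply wf_prefix. Qed.

Lemma cur_sizes h : wf h -> forall x, In x (cur h) -> 0 <= snd x <= 1.
Proof.
  induction h as [|u h IH] using rev_ind; intros Hw x Hx. destruct Hx.
  pose proof (wf_last h u Hw) as Hl. specialize (IH (wf_pre h u Hw)).
  rewrite cur_snoc in Hx. apply In_step in Hx. destruct u as [i s|i].
  - destruct Hx as [->|[Hx _]]. simpl; tauto. auto.
  - destruct Hx as [Hx _]; auto.
Qed.

Lemma packable_exists (l : list (nat * R)) : NoDup (map fst l) -> (forall x, In x l -> 0 <= snd x <= 1) -> exists k, packable (map snd l) k.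
Proof.
  intros ND Hs. destruct (nf_static l ND Hs) as (g & k & Pk & _). exists k. apply (packable_of_pkv l g k Pk).
Qed.

Lemma optlab_spec (l : list (nat * R)) : NoDup (map fst l) -> (forall x, In x l -> 0 <= snd x <= 1) -> pkv l (optlab l) (OPT (map snd l)).
Proof.
  intros ND Hs. unfold optlab. apply epsilon_spec.
  destruct (packable_exists l ND Hs) as (k & Hk).
  destruct (OPT_spec _ k Hk) as [Hp _].
  apply lab_of_packable; auto.
Qed.

Record Inv (d : R) (h : list update) (q : st) : Prop := mkInv {
  J1 : cur h = sNl q ++ filter (fun x => sPd q (fst x)) (sI0 q);
  J2a : NoDup (map fst (sI0 q));
  J2b : forall x, In x (sI0 q) -> 0 <= snd x <= 1;
  J3 : forall k', packable (map snd (sI0 q)) k' -> (sk0 q <= k')%nat;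
  J4 : forall x, In x (sI0 q) -> sPd q (fst x) = true -> (slab q (fst x) < sk0 q)%nat;
  J5 : forall b, sm snd (filter (fun x => sPd q (fst x) && Nat.eqb (slab q (fst x)) b) (sI0 q)) <= 1;
  J6 : forall x, In x (sNl q) -> (sk0 q <= slab q (fst x) <= sk0 q + snfb q)%nat;
  J7a : forall b, ld (sNl q) (slab q) b <= 1;
  J7b : ld (sNl q) (slab q) (sk0 q + snfb q) <= snfl q;
  J7c : 0 <= snfl q <= 1;
  J8 : INR (snfb q) + snfl q <= 2 * sW q;
  J9a : sV0 q = sm snd (sI0 q);
  J9b : sm snd (cur h) <= sV0 q + sU q;
  J9c : sm snd (filter (fun x => negb (sPd q (fst x))) (sI0 q)) + sW q <= sU q;
  J9d : 0 <= sW q;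
  J10 : sU q <= d * sV0 q;
  J11 : total_move (alg d) h <= (1 + / d) * (total_cost h - sU q)
}.

Lemma filter_true {X} (l : list X) : filter (fun _ => true) l = l.
Proof. induction l; simpl; f_equal; auto. Qed.

Lemma drop_id_app i a b : drop_id i (a ++ b) = drop_id i a ++ drop_id i b.
Proof. unfold drop_id. apply filter_app. Qed.

Lemma drop_filter i (P : nat -> bool) L :
  drop_id i (filter (fun x => P (fst x)) L) = filter (fun x => P (fst x) && negb (Nat.eqb (fst x) i)) L.
Proof.
  unfold drop_id. induction L as [|x L IH]; simpl; auto.
  destruct (P (fst x)); simpl; destruct (negb (Nat.eqb (fst x) i)); simpl; rewrite ?IH; auto.
Qed.

Lemma drop_id_notin i l : ~ present i l -> drop_id i l = l.
Proof.
  intros H. unfold drop_id. induction l as [|x l IH]; simpl; auto.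
  destruct (Nat.eqb_spec (fst x) i). exfalso; apply H; left; auto.
  simpl. f_equal. apply IH. intros Hp; apply H; right; auto.
Qed.

Lemma sm_filter_le {X} (h : X -> R) P l : (forall x, In x l -> 0 <= h x) -> sm h (filter P l) <= sm h l.
Proof. intros Hn. rewrite sm_filter. apply sm_le. intros x Hx. specialize (Hn x Hx). destruct (P x); lra. Qed.

Lemma ld_drop_le i L g b : (forall x, In x L -> 0 <= snd x) -> ld (drop_id i L) g b <= ld L g b.
Proof.
  intros Hn. unfold ld, drop_id. rewrite !sm_filter. apply sm_le. intros x Hx.
  specialize (Hn x Hx). destruct (negb _), (Nat.eqb _ _); simpl; lra.
Qed.

Lemma sm_drop_le i L : (forall x, In x L -> 0 <= snd x) -> sm snd (drop_id i L) <= sm snd L.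
Proof. intros Hn. unfold drop_id. apply sm_filter_le; auto. Qed.

Lemma D_split (P : nat -> bool) i (L : list (nat * R)) :
  sm snd (filter (fun x => negb (P (fst x) && negb (Nat.eqb (fst x) i))) L)
  = sm snd (filter (fun x => negb (P (fst x))) L) + sm snd (filter (fun x => P (fst x) && Nat.eqb (fst x) i) L).
Proof.
  rewrite !sm_filter, <- sm_plus. apply sm_ext. intros x _.
  destruct (P (fst x)), (Nat.eqb (fst x) i); simpl; lra.
Qed.

Lemma move_cost_zero (A : algorithm) prev next : (forall p, In p (cur prev) -> A prev (fst p) = A next (fst p)) ->
  move_cost A prev next = 0.
Proof.
  intros H. unfold move_cost. fold (sm snd (filter (fun p =>
          existsb (fun q => Nat.eqb (fst q) (fst p)) (cur next)
          && negb (Nat.eqb (A prev (fst p)) (A next (fst p)))) (cur prev))).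
  rewrite sm_filter. transitivity (sm (fun _ => 0) (cur prev)); [|apply sm_zero].
  apply sm_ext. intros p Hp. rewrite (H p Hp), Nat.eqb_refl, andb_false_r. auto.
Qed.

Lemma move_cost_le_vol (A : algorithm) prev next : (forall x, In x (cur prev) -> 0 <= snd x) ->
  move_cost A prev next <= sm snd (cur prev).
Proof.
  intros Hn. unfold move_cost. fold (sm snd (filter (fun p =>
          existsb (fun q => Nat.eqb (fst q) (fst p)) (cur next)
          && negb (Nat.eqb (A prev (fst p)) (A next (fst p)))) (cur prev))).
  apply sm_filter_le; auto.
Qed.

Lemma ld_app L1 L2 g b : ld (L1 ++ L2) g b = ld L1 g b + ld L2 g b.
Proof. unfold ld. rewrite filter_app, sm_app. auto. Qed.

Lemma ld_filterP (P : nat -> bool) L g b :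
  ld (filter (fun x => P (fst x)) L) g b = sm snd (filter (fun x => P (fst x) && Nat.eqb (g (fst x)) b) L).
Proof.
  unfold ld. induction L as [|x L IH]; auto. cbn [filter].
  destruct (P (fst x)); cbn [andb]; auto. cbn [filter].
  destruct (Nat.eqb (g (fst x)) b); auto. rewrite !sm_cons, IH; auto.
Qed.

Lemma ucost_nonneg l u : (forall x, In x l -> 0 <= snd x) -> (match u with Ins _ s => 0 <= s | _ => True end) -> 0 <= ucostL l u.
Proof.
  intros Hn Hu. destruct u; simpl; auto. fold (sm snd (filter (fun p => Nat.eqb (fst p) n) l)).
  apply sm_nonneg. intros x Hx. apply filter_In in Hx. apply Hn; tauto.
Qed.

Lemma Inv_init d : 0 < d -> Inv d [] init.
Proof.
  intros Hd. constructor; simpl; auto;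
  try solve [constructor | intros x [] | intros; lia | intros; rewrite sm_nil; lra
    | intros; unfold ld; simpl; rewrite sm_nil; lra | unfold ld; simpl; rewrite sm_nil; lra | lra
    | unfold cur; simpl; rewrite sm_nil; lra | unfold total_move, total_cost; simpl; lra].
Qed.

Lemma filter_false {X} (l : list X) : filter (fun _ => false) l = [].
Proof. induction l; simpl; auto. Qed.

Lemma Inv_U_nonneg d h q : Inv d h q -> 0 <= sU q.
Proof.
  intros I. pose proof (J9c _ _ _ I). pose proof (J9d _ _ _ I).
  assert (0 <= sm snd (filter (fun x => negb (sPd q (fst x))) (sI0 q))).
  { apply sm_nonneg. intros x Hx. apply filter_In in Hx. apply (J2b _ _ _ I); tauto. }
  lra.
Qed.

Lemma Inv_step_repack d h u : 0 < d <= 1/2 -> wf (h ++ [u]) -> Inv d h (fst (run d h)) ->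
  d * sV0 (fst (run d h)) <= sU (fst (run d h)) + ucostL (cur h) u ->
  Inv d (h ++ [u]) (repack (step (cur h) u)).
Proof.
  intros Hd Hw I Rp. set (q := fst (run d h)) in *.
  assert (Hs : forall x, In x (cur h) -> 0 <= snd x <= 1) by (apply cur_sizes, (wf_pre h u Hw)).
  assert (Hs' : forall x, In x (cur (h ++ [u])) -> 0 <= snd x <= 1) by (apply cur_sizes; auto).
  pose proof (wf_last h u Hw) as Hl.
  assert (Hc : 0 <= ucostL (cur h) u).
  { apply ucost_nonneg. intros x Hx; apply Hs; auto. destruct u; auto; tauto. }
  rewrite <- cur_snoc.
  assert (ND' := cur_nodup (h ++ [u])).
  pose proof (optlab_spec (cur (h ++ [u])) ND' Hs') as [P1 P2].
  pose proof (Inv_U_nonneg d h q I) as HU0.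
  constructor; simpl.
  - rewrite filter_true; auto.
  - auto.
  - auto.
  - intros k' Hk'. apply OPT_le; auto.
  - intros x Hx _. apply P1; auto.
  - intros b. apply P2.
  - intros x [].
  - intros b. unfold ld; simpl; rewrite sm_nil; lra.
  - unfold ld; simpl; rewrite sm_nil; lra.
  - lra.
  - simpl; lra.
  - auto.
  - lra.
  - rewrite filter_false, sm_nil. lra.
  - lra.
  - apply Rmult_le_pos. lra. apply sm_nonneg. intros x Hx; apply Hs'; auto.
  - rewrite total_move_snoc, total_cost_snoc, upd_cost_ucostL.
    pose proof (J11 _ _ _ I) as T. pose proof (J9b _ _ _ I) as V.
    pose proof (move_cost_le_vol (alg d) h (h ++ [u]) ltac:(intros x Hx; apply Hs; auto)) as MC.
    set (e := / d). assert (He : d * e = 1) by (unfold e; field; lra). assert (He0 : 0 < e) by (unfold e; apply Rinv_0_lt_compat; lra).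
    assert (Vb : sV0 q <= e * (sU q + ucostL (cur h) u)).
    { assert (e * (d * sV0 q) <= e * (sU q + ucostL (cur h) u)) by (apply Rmult_le_compat_l; lra).
      replace (e * (d * sV0 q)) with (sV0 q) in H by (rewrite <- Rmult_assoc, (Rmult_comm e d), He; ring). auto. }
    fold e in T.
    set (TM := total_move (alg d) h) in *. set (TC := total_cost h) in *.
    set (mc := move_cost (alg d) h (h ++ [u])) in *. set (c := ucostL (cur h) u) in *.
    assert (e * c >= 0) by nra.
    nra.
Qed.

Lemma filter_filter2 {X} (P Q : X -> bool) L : filter Q (filter P L) = filter (fun x => P x && Q x) L.
Proof. induction L as [|x L IH]; simpl; auto. destruct (P x); simpl; destruct (Q x); simpl; rewrite ?IH; auto. Qed.

Lemma alg_snoc d h u i : alg d (h ++ [u]) i = slab (trans d (fst (run d h)) (cur h) u) i.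
Proof. unfold alg. rewrite run_fst_snoc. auto. Qed.

Lemma pres_of_in x l : In x l -> present (fst x) l.
Proof. intros H. apply in_map; auto. Qed.

Lemma Inv_step d h u : 0 < d <= 1/2 -> wf (h ++ [u]) -> Inv d h (fst (run d h)) ->
  Inv d (h ++ [u]) (fst (run d (h ++ [u]))).
Proof.
  intros Hd Hw I. rewrite run_fst_snoc.
  assert (Halg' := alg_snoc d h u).
  set (q := fst (run d h)) in *.
  assert (Hs : forall x, In x (cur h) -> 0 <= snd x <= 1) by (apply cur_sizes, (wf_pre h u Hw)).
  pose proof (wf_last h u Hw) as Hl.
  pose proof (J1 _ _ _ I) as E1.
  assert (HNl : forall x, In x (sNl q) -> 0 <= snd x <= 1).
  { intros x Hx. apply Hs. rewrite E1. apply in_or_app; auto. }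
  assert (HNl0 : forall x, In x (sNl q) -> 0 <= snd x) by (intros x Hx; apply HNl; auto).
  pose proof (Inv_U_nonneg d h q I) as HU0.
  destruct (Rle_dec (d * sV0 q) (sU q + ucostL (cur h) u)) as [Rp|NRp].
  { unfold trans. destruct (Rle_dec _ _); [|contradiction]. apply Inv_step_repack; auto. }
  destruct u as [i s|i].
  -
    destruct Hl as [Hsz Hnp].
    assert (Hnl : ~ In i (map fst (drop_id i (sNl q)))).
    { intros Hin. apply in_map_iff in Hin as (y & Ey & Hy). apply in_drop_id in Hy. tauto. }
    assert (EC : cur (h ++ [Ins i s]) = ((i, s) :: drop_id i (sNl q)) ++ filter (fun x => sPd q (fst x) && negb (Nat.eqb (fst x) i)) (sI0 q)).
    { rewrite cur_snoc, E1. simpl. rewrite drop_id_app, drop_filter. auto. }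
    assert (Hfix : forall p, In p (cur h) -> fst p <> i).
    { intros p Hp E. apply Hnp. rewrite <- E. apply pres_of_in; auto. }
    assert (HD0 : sm snd (filter (fun x => sPd q (fst x) && Nat.eqb (fst x) i) (sI0 q)) = 0).
    { rewrite sm_filter. transitivity (sm (fun _ => 0) (sI0 q)); [|apply sm_zero]. apply sm_ext. intros x Hx.
      destruct (sPd q (fst x)) eqn:P; simpl; auto. destruct (Nat.eqb_spec (fst x) i); auto.
      exfalso. apply (Hfix x); auto. rewrite E1. apply in_or_app. right. apply filter_In; auto. }
    assert (HJ11 : total_move (alg d) (h ++ [Ins i s]) = total_move (alg d) h).
    { rewrite total_move_snoc, move_cost_zero. lra. intros p Hp. rewrite Halg'. unfold trans.
      destruct (Rle_dec _ _); [contradiction|]. unfold alg. fold q.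
      destruct (Rle_dec _ _); simpl; unfold updf; destruct (Nat.eqb_spec (fst p) i); auto; exfalso; apply (Hfix p); auto. }
    assert (HTC : total_cost (h ++ [Ins i s]) = total_cost h + s) by (rewrite total_cost_snoc; auto).
    assert (Hvol : sm snd (cur (h ++ [Ins i s])) <= s + sm snd (cur h)).
    { rewrite cur_snoc. simpl. rewrite sm_cons. simpl. pose proof (sm_drop_le i (cur h) ltac:(intros x Hx; apply Hs; auto)). lra. }
    simpl ucostL in NRp.
    assert (HJ4 : forall v x, In x (sI0 q) -> sPd q (fst x) && negb (Nat.eqb (fst x) i) = true -> (updf (slab q) i v (fst x) < sk0 q)%nat).
    { intros v x Hx Hp. apply andb_true_iff in Hp as [Hp Hn]. unfold updf. apply negb_true_iff in Hn. rewrite Hn. apply (J4 _ _ _ I); auto. }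
    assert (HJ5 : forall v b, sm snd (filter (fun x => sPd q (fst x) && negb (Nat.eqb (fst x) i) && Nat.eqb (updf (slab q) i v (fst x)) b) (sI0 q)) <= 1).
    { intros v b. eapply Rle_trans; [|apply (J5 _ _ _ I b)]. rewrite !sm_filter. apply sm_le. intros x Hx.
      pose proof (J2b _ _ _ I x Hx). unfold updf. destruct (sPd q (fst x)); simpl; [|lra].
      destruct (Nat.eqb_spec (fst x) i); simpl; destruct (Nat.eqb _ b); lra. }
    assert (HJ9c : sm snd (filter (fun x => negb (sPd q (fst x) && negb (Nat.eqb (fst x) i))) (sI0 q)) = sm snd (filter (fun x => negb (sPd q (fst x))) (sI0 q))).
    { rewrite D_split, HD0. lra. }
    assert (HJ6 : forall v x, (sk0 q <= v)%nat -> In x ((i, s) :: drop_id i (sNl q)) ->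
        (sk0 q <= updf (slab q) i v (fst x) <= Nat.max v (sk0 q + snfb q))%nat).
    { intros v x Hv [<-|Hx]. unfold updf; simpl; rewrite Nat.eqb_refl; lia.
      apply in_drop_id in Hx as [Hx Hne]. unfold updf. apply Nat.eqb_neq in Hne. rewrite Hne.
      pose proof (J6 _ _ _ I x Hx). lia. }
    assert (Hld : forall v b, ld ((i, s) :: drop_id i (sNl q)) (updf (slab q) i v) b <= (if Nat.eqb v b then s else 0) + ld (sNl q) (slab q) b).
    { intros v b. change (updf (slab q) i v) with (updf (slab q) (fst (i, s)) v). rewrite ld_cons_upd by auto. cbn [snd].
      pose proof (ld_drop_le i (sNl q) (slab q) b HNl0). lra. }
    unfold trans. destruct (Rle_dec _ _) as [X|_]; [simpl in X; contradiction|].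
    destruct (Rle_dec (snfl q + s) 1) as [Fit|NFit]; constructor; cbn [sNl sPd sI0 sk0 slab snfb snfl sW sU sV0 ucostL].
    + exact EC.
    + apply (J2a _ _ _ I).
    + apply (J2b _ _ _ I).
    + apply (J3 _ _ _ I).
    + intros x Hx Hp. apply HJ4; auto.
    + intros b. apply HJ5.
    + intros x Hx. pose proof (HJ6 (sk0 q + snfb q)%nat x ltac:(lia) Hx). lia.
    + intros b. eapply Rle_trans. apply Hld. destruct (Nat.eqb_spec (sk0 q + snfb q) b).
      * subst. pose proof (J7b _ _ _ I). lra.
      * pose proof (J7a _ _ _ I b). lra.
    + eapply Rle_trans. apply Hld. rewrite Nat.eqb_refl. pose proof (J7b _ _ _ I). lra.
    + pose proof (J7c _ _ _ I). lra.
    + pose proof (J8 _ _ _ I). lra.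
    + apply (J9a _ _ _ I).
    + pose proof (J9b _ _ _ I). lra.
    + rewrite HJ9c. pose proof (J9c _ _ _ I). lra.
    + pose proof (J9d _ _ _ I). lra.
    + lra.
    + rewrite HJ11, HTC. pose proof (J11 _ _ _ I). lra.
    + exact EC.
    + apply (J2a _ _ _ I).
    + apply (J2b _ _ _ I).
    + apply (J3 _ _ _ I).
    + intros x Hx Hp. apply HJ4; auto.
    + intros b. apply HJ5.
    + intros x Hx. pose proof (HJ6 (sk0 q + S (snfb q))%nat x ltac:(lia) Hx). lia.
    + assert (Z : ld (sNl q) (slab q) (sk0 q + S (snfb q)) = 0).
      { apply ld_zero. intros x Hx. pose proof (J6 _ _ _ I x Hx). lia. }
      intros b. eapply Rle_trans. apply Hld. destruct (Nat.eqb_spec (sk0 q + S (snfb q)) b).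
      * subst. lra.
      * pose proof (J7a _ _ _ I b). lra.
    + assert (Z : ld (sNl q) (slab q) (sk0 q + S (snfb q)) = 0).
      { apply ld_zero. intros x Hx. pose proof (J6 _ _ _ I x Hx). lia. }
      eapply Rle_trans. apply Hld. rewrite Nat.eqb_refl. lra.
    + lra.
    + pose proof (J8 _ _ _ I). rewrite S_INR. pose proof (J7c _ _ _ I). lra.
    + apply (J9a _ _ _ I).
    + pose proof (J9b _ _ _ I). lra.
    + rewrite HJ9c. pose proof (J9c _ _ _ I). lra.
    + pose proof (J9d _ _ _ I). lra.
    + lra.
    + rewrite HJ11, HTC. pose proof (J11 _ _ _ I). lra.
  -
    set (c := ucostL (cur h) (Del i)) in *.
    assert (Hc0 : 0 <= c) by (apply ucost_nonneg; auto; intros x Hx; apply Hs; auto).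
    assert (EC : cur (h ++ [Del i]) = drop_id i (sNl q) ++ filter (fun x => sPd q (fst x) && negb (Nat.eqb (fst x) i)) (sI0 q)).
    { rewrite cur_snoc, E1. simpl. rewrite drop_id_app, drop_filter. auto. }
    assert (HJ11 : total_move (alg d) (h ++ [Del i]) = total_move (alg d) h).
    { rewrite total_move_snoc, move_cost_zero. lra. intros p Hp. rewrite Halg'. unfold trans.
      destruct (Rle_dec _ _); [contradiction|]. simpl. auto. }
    assert (HTC : total_cost (h ++ [Del i]) = total_cost h + c) by (rewrite total_cost_snoc; auto).
    assert (Hvol : sm snd (cur (h ++ [Del i])) <= sm snd (cur h)).
    { rewrite cur_snoc. simpl. apply sm_drop_le. intros x Hx; apply Hs; auto. }
    assert (HDc : sm snd (filter (fun x => sPd q (fst x) && Nat.eqb (fst x) i) (sI0 q)) <= c).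
    { unfold c. simpl. fold (sm snd (filter (fun p => Nat.eqb (fst p) i) (cur h))). rewrite E1, filter_app, sm_app.
      assert (0 <= sm snd (filter (fun p => Nat.eqb (fst p) i) (sNl q))).
      { apply sm_nonneg. intros x Hx. apply filter_In in Hx. apply HNl0; tauto. }
      assert (sm snd (filter (fun x => sPd q (fst x) && Nat.eqb (fst x) i) (sI0 q))
              = sm snd (filter (fun p => Nat.eqb (fst p) i) (filter (fun x => sPd q (fst x)) (sI0 q)))).
      { rewrite filter_filter2. auto. }
      lra. }
    unfold trans. destruct (Rle_dec _ _) as [X|_]; [contradiction|].
    constructor; cbn [sNl sPd sI0 sk0 slab snfb snfl sW sU sV0]; fold c.
    + exact EC.
    + apply (J2a _ _ _ I).
    + apply (J2b _ _ _ I).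
    + apply (J3 _ _ _ I).
    + intros x Hx Hp. apply andb_true_iff in Hp as [Hp _]. apply (J4 _ _ _ I); auto.
    + intros b. eapply Rle_trans; [|apply (J5 _ _ _ I b)]. rewrite !sm_filter. apply sm_le. intros x Hx.
      pose proof (J2b _ _ _ I x Hx). destruct (sPd q (fst x)); simpl; [|lra].
      destruct (negb _); simpl; [lra|]. destruct (Nat.eqb _ b); lra.
    + intros x Hx. apply in_drop_id in Hx as [Hx _]. apply (J6 _ _ _ I); auto.
    + intros b. pose proof (ld_drop_le i (sNl q) (slab q) b HNl0). pose proof (J7a _ _ _ I b). lra.
    + pose proof (ld_drop_le i (sNl q) (slab q) (sk0 q + snfb q) HNl0). pose proof (J7b _ _ _ I). lra.
    + apply (J7c _ _ _ I).
    + apply (J8 _ _ _ I).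
    + apply (J9a _ _ _ I).
    + pose proof (J9b _ _ _ I). lra.
    + rewrite D_split. pose proof (J9c _ _ _ I). lra.
    + apply (J9d _ _ _ I).
    + lra.
    + rewrite HJ11, HTC. pose proof (J11 _ _ _ I). lra.
Qed.

Lemma Inv_all d h : 0 < d <= 1/2 -> wf h -> Inv d h (fst (run d h)).
Proof.
  intros Hd. induction h as [|u h IH] using rev_ind; intros Hw.
  - apply Inv_init. lra.
  - apply Inv_step; auto. apply IH. apply (wf_pre h u Hw).
Qed.

Lemma load_alg d h b : load (alg d) h b = ld (cur h) (slab (fst (run d h))) b.
Proof. reflexivity. Qed.

Lemma load_split d h b : 0 < d <= 1/2 -> wf h ->
  let q := fst (run d h) in
  load (alg d) h b = ld (sNl q) (slab q) b + sm snd (filter (fun x => sPd q (fst x) && Nat.eqb (slab q (fst x)) b) (sI0 q)).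
Proof.
  intros Hd Hw q. pose proof (Inv_all d h Hd Hw) as I. fold q in I.
  rewrite load_alg. fold q. rewrite (J1 _ _ _ I), ld_app, ld_filterP. auto.
Qed.

Lemma valid_alg_d d : 0 < d <= 1/2 -> valid_alg (alg d).
Proof.
  intros Hd h Hw b. pose proof (Inv_all d h Hd Hw) as I.
  rewrite (load_split d h b Hd Hw). set (q := fst (run d h)) in *.
  destruct (Nat.lt_ge_cases b (sk0 q)) as [Hb|Hb].
  - rewrite ld_zero. pose proof (J5 _ _ _ I b). lra.
    intros x Hx. pose proof (J6 _ _ _ I x Hx). lia.
  - assert (Z : sm snd (filter (fun x => sPd q (fst x) && Nat.eqb (slab q (fst x)) b) (sI0 q)) = 0).
    { rewrite sm_filter. transitivity (sm (fun _ => 0) (sI0 q)); [|apply sm_zero]. apply sm_ext. intros x Hx.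
      destruct (sPd q (fst x)) eqn:P; simpl; auto. destruct (Nat.eqb_spec (slab q (fst x)) b); auto.
      pose proof (J4 _ _ _ I x Hx P). lia. }
    rewrite Z. pose proof (J7a _ _ _ I b). lra.
Qed.

Lemma nodup_fst_filter (P : nat * R -> bool) L : NoDup (map fst L) -> NoDup (map fst (filter P L)).
Proof.
  induction L as [|x L IH]; simpl; intros ND; auto. inversion ND; subst.
  destruct (P x); simpl; auto. constructor; auto. intros Hin. apply H1.
  apply in_map_iff in Hin as (y & Ey & Hy). apply filter_In in Hy. rewrite <- Ey. apply in_map; tauto.
Qed.

Lemma bins_bound d h : 0 < d <= 1/2 -> wf h ->
  let q := fst (run d h) in (bins_used (alg d) h <= S (sk0 q + snfb q))%nat.
Proof.
  intros Hd Hw q. pose proof (Inv_all d h Hd Hw) as I. fold q in I.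
  unfold bins_used. change (length (labs (fun p => slab q (fst p)) (cur h)) <= S (sk0 q + snfb q))%nat.
  apply bins_le. intros x Hx. rewrite (J1 _ _ _ I) in Hx. apply in_app_or in Hx as [Hx|Hx].
  - pose proof (J6 _ _ _ I x Hx). lia.
  - apply filter_In in Hx as [Hx P]. pose proof (J4 _ _ _ I x Hx P). lia.
Qed.

Lemma k0_bound d h : 0 < d <= 1/2 -> wf h ->
  let q := fst (run d h) in
  INR (sk0 q) <= INR (OPT (sizes h)) + 2 * sm snd (filter (fun x => negb (sPd q (fst x))) (sI0 q)) + 1.
Proof.
  intros Hd Hw q. pose proof (Inv_all d h Hd Hw) as I. fold q in I.
  assert (Hs := cur_sizes h Hw).
  set (On := OPT (sizes h)).
  destruct (packable_exists (cur h) (cur_nodup h) Hs) as (k & Hk).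
  destruct (OPT_spec _ k Hk) as [Hp _]. fold On in Hp.
  destruct (lab_of_packable (cur h) On (cur_nodup h) Hp) as (g1 & G1a & G1b).
  set (Dl := filter (fun x => negb (sPd q (fst x))) (sI0 q)).
  destruct (nf_static Dl) as (g2 & k2 & (G2a & G2b) & Hk2).
  { apply nodup_fst_filter, (J2a _ _ _ I). }
  { intros x Hx. apply filter_In in Hx. apply (J2b _ _ _ I); tauto. }
  set (g := fun i => if sPd q i then g1 i else (On + g2 i)%nat).
  assert (HP : packable (map snd (sI0 q)) (On + k2)).
  { apply (packable_of_lab _ _ g).
    - intros x Hx. unfold g. destruct (sPd q (fst x)) eqn:P.
      + assert (In x (cur h)) by (rewrite (J1 _ _ _ I); apply in_or_app; right; apply filter_In; auto).
        specialize (G1a x H). lia.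
      + assert (In x Dl) by (apply filter_In; rewrite P; auto). specialize (G2a x H). lia.
    - intros b Hb.
      assert (Split : sm snd (filter (fun x => Nat.eqb (g (fst x)) b) (sI0 q)) =
        ld (filter (fun x => sPd q (fst x)) (sI0 q)) g1 b + ld Dl (fun i => (On + g2 i)%nat) b).
      { unfold Dl, ld. rewrite !filter_filter2. rewrite !sm_filter, <- sm_plus. apply sm_ext. intros x _.
        unfold g. destruct (sPd q (fst x)); simpl; destruct (Nat.eqb _ b); lra. }
      rewrite Split.
      assert (A1 : ld (filter (fun x => sPd q (fst x)) (sI0 q)) g1 b <= ld (cur h) g1 b).
      { rewrite (J1 _ _ _ I), ld_app. assert (0 <= ld (sNl q) g1 b); [|lra].
        apply sm_nonneg. intros x Hx. apply filter_In in Hx as [Hx _]. apply Hs. rewrite (J1 _ _ _ I). apply in_or_app; auto. }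
      destruct (Nat.lt_ge_cases b On) as [Hb'|Hb'].
      + rewrite (ld_zero Dl). pose proof (G1b b). lra. intros x _. lia.
      + assert (Z : ld (cur h) g1 b = 0) by (apply ld_zero; intros x Hx; specialize (G1a x Hx); lia).
        assert (ld Dl (fun i => (On + g2 i)%nat) b = ld Dl g2 (b - On)).
        { unfold ld. f_equal. apply filter_ext. intros x. apply eq_true_iff_eq. rewrite !Nat.eqb_eq. lia. }
        assert (0 <= ld (filter (fun x => sPd q (fst x)) (sI0 q)) g1 b).
        { apply sm_nonneg. intros x Hx. apply filter_In in Hx as [Hx _]. apply filter_In in Hx as [Hx _]. apply (J2b _ _ _ I); auto. }
        pose proof (G2b (b - On)%nat). lra. }
  pose proof (J3 _ _ _ I _ HP) as Hk0. apply le_INR in Hk0. rewrite plus_INR in Hk0.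
  fold Dl. lra.
Qed.

Lemma vol_split (P : nat -> bool) (L : list (nat * R)) :
  sm snd L = sm snd (filter (fun x => P (fst x)) L) + sm snd (filter (fun x => negb (P (fst x))) L).
Proof. rewrite !sm_filter, <- sm_plus. apply sm_ext. intros x _. destruct (P (fst x)); simpl; lra. Qed.

Lemma comp_bound d h : 0 < d <= 1/2 -> wf h ->
  INR (bins_used (alg d) h) <= (1 + 4 * d) * INR (OPT (sizes h)) + 2.
Proof.
  intros Hd Hw. pose proof (Inv_all d h Hd Hw) as I.
  pose proof (bins_bound d h Hd Hw) as B. pose proof (k0_bound d h Hd Hw) as K.
  set (q := fst (run d h)) in *. apply le_INR in B. rewrite S_INR, plus_INR in B.
  set (On := INR (OPT (sizes h))) in *.
  set (D := sm snd (filter (fun x => negb (sPd q (fst x))) (sI0 q))) in *.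
  pose proof (J8 _ _ _ I). pose proof (J7c _ _ _ I). pose proof (J9c _ _ _ I). pose proof (J9d _ _ _ I).
  pose proof (J10 _ _ _ I). pose proof (J9a _ _ _ I). fold D in H1.
  assert (Hs := cur_sizes h Hw).
  assert (Hvol : sm snd (cur h) <= On).
  { destruct (packable_exists (cur h) (cur_nodup h) Hs) as (k & Hk).
    destruct (OPT_spec _ k Hk) as [Hp _]. apply vol_le_packable in Hp. auto. }
  assert (HV : sV0 q <= On + sU q).
  { rewrite H4, (vol_split (sPd q)). fold D.
    assert (sm snd (filter (fun x => sPd q (fst x)) (sI0 q)) <= sm snd (cur h)).
    { rewrite (J1 _ _ _ I), sm_app. assert (0 <= sm snd (sNl q)); [|lra].
      apply sm_nonneg. intros x Hx. apply Hs. rewrite (J1 _ _ _ I). apply in_or_app; auto. }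
    assert (0 <= D) by (apply sm_nonneg; intros x Hx; apply filter_In in Hx; apply (J2b _ _ _ I); tauto).
    lra. }
  assert (HD0 : 0 <= D) by (apply sm_nonneg; intros x Hx; apply filter_In in Hx; apply (J2b _ _ _ I); tauto).
  assert (HU : sU q <= 2 * d * On).
  { assert (sU q <= d * On + d * sU q) by nra. nra. }
  cbv zeta in K. fold D in K.
  assert (INR (bins_used (alg d) h) <= On + 2 * sU q + 2) by lra.
  nra.
Qed.

Lemma total_cost_nonneg_wf h : wf h -> 0 <= total_cost h.
Proof.
  induction h as [|u h IH] using rev_ind; intros Hw.
  - unfold total_cost; simpl; lra.
  - rewrite total_cost_snoc, upd_cost_ucostL. pose proof (wf_last h u Hw).
    assert (0 <= ucostL (cur h) u).
    { apply ucost_nonneg. intros x Hx. apply (cur_sizes h (wf_pre h u Hw)); auto. destruct u; auto; tauto. }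
    specialize (IH (wf_pre h u Hw)). lra.
Qed.

Theorem part1 : exists C1 C2 : R, 0 < C1 /\ 0 < C2 /\
     forall eps : R, 0 < eps <= 1 ->
       exists A : algorithm,
         valid_alg A /\ competitive A (1 + eps) (C1 / eps ^ 2) /\ recourse A (C2 / eps).
Proof.
  exists 2, 5. split; [lra|]. split; [lra|]. intros eps He.
  set (d := eps / 4). assert (Hd : 0 < d <= 1/2) by (unfold d; lra).
  exists (alg d). split; [|split].
  - apply valid_alg_d; auto.
  - intros h Hw. pose proof (comp_bound d h Hd Hw).
    replace (1 + 4 * d) with (1 + eps) in H by (unfold d; field).
    assert (2 <= 2 / eps ^ 2).
    { assert (eps ^ 2 <= 1) by nra. assert (0 < eps ^ 2) by nra.
      apply (Rmult_le_reg_r (eps ^ 2)); auto. unfold Rdiv. rewrite Rmult_assoc, Rinv_l by lra. nra. }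
    lra.
  - intros h Hw. pose proof (Inv_all d h Hd Hw) as I. pose proof (J11 _ _ _ I) as T.
    pose proof (Inv_U_nonneg d h _ I). pose proof (total_cost_nonneg_wf h Hw).
    replace (/ d) with (4 / eps) in T by (unfold d; field; lra).
    set (TC := total_cost h) in *. set (U := sU (fst (run d h))) in *.
    assert (1 + 4 / eps <= 5 / eps).
    { assert (1 <= 1 / eps) by (apply (Rmult_le_reg_r eps); [lra|]; unfold Rdiv; rewrite Rmult_assoc, Rinv_l by lra; lra).
      unfold Rdiv in *. lra. }
    assert (0 <= 4 / eps) by (apply Rlt_le, Rdiv_lt_0_compat; lra).
    assert ((1 + 4 / eps) * (TC - U) <= (1 + 4 / eps) * TC) by nra.
    assert ((1 + 4 / eps) * TC <= 5 / eps * TC) by nra.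
    lra.
Qed.

Theorem theorem1p4 :
  (exists C1 C2 : R, 0 < C1 /\ 0 < C2 /\
     forall eps : R, 0 < eps <= 1 ->
       exists A : algorithm,
         valid_alg A /\ competitive A (1 + eps) (C1 / eps ^ 2) /\ recourse A (C2 / eps))
  /\
  (exists c : R, 0 < c /\
     forall delta : R, 0 < delta ->
       exists eps : R, 0 < eps < delta /\
         forall (A : algorithm) (f : nat -> R) (gamma : R),
           valid_alg A -> little_o f -> competitive_fn A (1 + eps) f ->
           recourse A gamma -> c / eps <= gamma).
Proof.
  split.
  - exact part1.
  - exact part2.
Qed.
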